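(* Consider a $d$-regular simple graph ($d\ge3$) on $B$ bonds, quantised with unitary vertex scattering matrices without back-scattering (all diagonal entries zero). Let $T$ be a positive integer, $\kappa>0$, and $f\in\mathbb{C}^{2B}$ with $|f_b|\le\kappa$ for each $b$ and $\mathrm{Tr}\,\mathrm{Op}(f)=\sum_bf_b=0$. Then there is a constant $c$ depending only on $d$ such that $$V(f,B)\le\frac1{2BT}\sum_{b}|f_b|^2+\frac1B\sum_{t=1}^T\hat w_T(t)\Big(\langle f,M^tf\rangle_{\mathbb{C}^{2B}}+c\,\kappa^2(d-1)^t|\mathcal{C}_{B,2T}|\Big).$$
   Context: Directed bonds, $o(b)$, $t(b)$, vertex matrices $\sigma_v$, the bond scattering matrix $S$ ($S_{bc}=0$ unless $t(b)=o(c)$, otherwise the entry of $\sigma_{t(b)}$ in the row of the bond of $c$ and column of the bond of $b$) and $U(k)_{bc}=e^{ikL_b}S_{bc}$ are as usual for quantum graphs with bond lengths $L_b>0$. $M_{bc}=|S_{bc}|^2$. $\mathrm{Op}(f)=\mathrm{diag}(f)$, $\langle x,y\rangle=\sum\bar x_iy_i$. With $\{\phi_j(k)\}$ an orthonormal eigenbasis of $U(k)$, $V(f,B)=\frac1{2B}\lim_{K\to\infty}\frac1K\int_0^K\sum_{j=1}^{2B}|\langle\phi_j(k),\mathrm{Op}(f)\phi_j(k)\rangle-\frac1{2B}\mathrm{Tr}\,\mathrm{Op}(f)|^2dk$. $\hat w_T(t)=\frac1T(1-\frac{|t|}T)$ for $|t|<T$ and $0$ otherwise. A cycle is a closed path without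 back-tracking; $\mathcal{C}_{B,t}$ is the set of bonds on a cycle of length at most $t$. *)

(* Defs.v *)
From Stdlib Require Import Reals Lra Lia Arith List ClassicalEpsilon.
Import ListNotations.
Open Scope R_scope.

Record Cplx := mkC { re : R; im : R }.
Definition C0 : Cplx := mkC 0 0.
Definition C1 : Cplx := mkC 1 0.
Definition CR (r : R) : Cplx := mkC r 0.
Definition Cadd (x y : Cplx) : Cplx := mkC (re x + re y) (im x + im y).
Definition Csub (x y : Cplx) : Cplx := mkC (re x - re y) (im x - im y).
Definition Cmul (x y : Cplx) : Cplx :=
  mkC (re x * re y - im x * im y) (re x * im y + im x * re y).
Definition Cconj (x : Cplx) : Cplx := mkC (re x) (- im x).
Definition Cnorm2 (x : Cplx) : R := re x * re x + im x * im x.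
Definition Cabs (x : Cplx) : R := sqrt (Cnorm2 x).
Definition Cexpi (x : R) : Cplx := mkC (cos x) (sin x).

Fixpoint Csum (n : nat) (F : nat -> Cplx) : Cplx :=
  match n with O => C0 | S m => Cadd (Csum m F) (F m) end.
Fixpoint Rsum (n : nat) (F : nat -> R) : R :=
  match n with O => 0 | S m => Rsum m F + F m end.
Fixpoint countP (n : nat) (P : nat -> Prop) : nat :=
  match n with
  | O => O
  | S m => (countP m P + if excluded_middle_informative (P m) then 1 else 0)%nat
  end.

(** * Graphs
   A graph with [n] vertices 0..n-1 and [B] (undirected) bonds 0..B-1;
   bond e joins vertices [e1 e] and [e2 e].  Directed bonds are 0..2B-1:
   for e < B, directed bond e goes e1 e -> e2 e and directed bond e+B goes
   e2 e -> e1 e. *)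
Section Graph.
Variables (B : nat) (e1 e2 : nat -> nat).

Definition ub (b : nat) : nat := if (b <? B)%nat then b else (b - B)%nat.
Definition ob (b : nat) : nat := if (b <? B)%nat then e1 b else e2 (b - B)%nat.
Definition tb (b : nat) : nat := if (b <? B)%nat then e2 b else e1 (b - B)%nat.
Definition revb (b : nat) : nat := if (b <? B)%nat then (b + B)%nat else (b - B)%nat.

Definition incidentb (v e : nat) : bool := Nat.eqb (e1 e) v || Nat.eqb (e2 e) v.

Definition simple_graph (n : nat) : Prop :=
  (forall e, (e < B)%nat -> (e1 e < n)%nat /\ (e2 e < n)%nat /\ e1 e <> e2 e) /\
  (forall e e', (e < B)%nat -> (e' < B)%nat ->
     ((e1 e = e1 e' /\ e2 e = e2 e') \/ (e1 e = e2 e' /\ e2 e = e1 e')) -> e = e').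

Definition degree (v : nat) : nat := length (filter (incidentb v) (seq 0 B)).

Definition regular (n d : nat) : Prop := forall v, (v < n)%nat -> degree v = d.

(** [sigma v] is the vertex scattering matrix at v, indexed (row, column) by
    the bonds incident to v. *)
Definition vertex_unitary (n : nat) (sigma : nat -> nat -> nat -> Cplx) : Prop :=
  forall v e e', (v < n)%nat -> (e < B)%nat -> (e' < B)%nat ->
    incidentb v e = true -> incidentb v e' = true ->
    Csum B (fun x => if incidentb v x then Cmul (Cconj (sigma v x e)) (sigma v x e') else C0)
      = (if Nat.eqb e e' then C1 else C0) /\
    Csum B (fun x => if incidentb v x then Cmul (sigma v e x) (Cconj (sigma v e' x)) else C0)
      = (if Nat.eqb e e' then C1 else C0).

Definition no_backscattering (n : nat) (sigma : nat -> nat -> nat -> Cplx) : Prop :=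
  forall v e, (v < n)%nat -> (e < B)%nat -> incidentb v e = true -> sigma v e e = C0.

Definition Smat (sigma : nat -> nat -> nat -> Cplx) (b c : nat) : Cplx :=
  if Nat.eqb (tb b) (ob c) then sigma (tb b) (ub c) (ub b) else C0.

Definition Umat (L : nat -> R) (sigma : nat -> nat -> nat -> Cplx) (k : R) (b c : nat) : Cplx :=
  Cmul (Cexpi (k * L (ub b))) (Smat sigma b c).

Definition Mmat (sigma : nat -> nat -> nat -> Cplx) (b c : nat) : R := Cnorm2 (Smat sigma b c).

Fixpoint Mpow (sigma : nat -> nat -> nat -> Cplx) (t : nat) (b c : nat) : R :=
  match t with
  | O => if Nat.eqb b c then 1 else 0
  | S t' => Rsum (2 * B) (fun a => Mmat sigma b a * Mpow sigma t' a c)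
  end.

Definition cinner (x y : nat -> Cplx) : Cplx :=
  Csum (2 * B) (fun b => Cmul (Cconj (x b)) (y b)).

Definition f_Mt_f (sigma : nat -> nat -> nat -> Cplx) (t : nat) (f : nat -> Cplx) : Cplx :=
  cinner f (fun b => Csum (2 * B) (fun c => Cmul (CR (Mpow sigma t b c)) (f c))).

Definition is_onb_eigenbasis (U : nat -> nat -> Cplx) (phi : nat -> nat -> Cplx) : Prop :=
  (forall j j', (j < 2 * B)%nat -> (j' < 2 * B)%nat ->
     cinner (phi j) (phi j') = (if Nat.eqb j j' then C1 else C0)) /\
  (forall j, (j < 2 * B)%nat -> exists lam : Cplx,
     forall b, (b < 2 * B)%nat ->
       Csum (2 * B) (fun c => Cmul (U b c) (phi j c)) = Cmul lam (phi j b)).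

Definition Op (f : nat -> Cplx) (x : nat -> Cplx) : nat -> Cplx := fun b => Cmul (f b) (x b).
Definition TrOp (f : nat -> Cplx) : Cplx := Csum (2 * B) f.

Definition V_integrand (f : nat -> Cplx) (phi : R -> nat -> nat -> Cplx) (k : R) : R :=
  Rsum (2 * B) (fun j =>
    Cnorm2 (Csub (cinner (phi k j) (Op f (phi k j)))
                 (Cmul (CR (1 / (2 * INR B))) (TrOp f)))).

Definition is_cycle (p : list nat) : Prop :=
  (0 < length p)%nat /\
  (forall i, In i p -> (i < 2 * B)%nat) /\
  (forall i, (i < length p)%nat ->
     tb (nth i p O) = ob (nth ((i + 1) mod length p) p O) /\
     nth ((i + 1) mod length p) p O <> revb (nth i p O)).

Definition on_short_cycle (t : nat) (e : nat) : Prop :=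
  exists p b, is_cycle p /\ (length p <= t)%nat /\ In b p /\ ub b = e.

Definition card_CBt (t : nat) : nat := countP B (on_short_cycle t).

End Graph.

Definition w_hat (T : nat) (t : R) : R :=
  if Rlt_dec (Rabs t) (INR T) then (1 / INR T) * (1 - Rabs t / INR T) else 0.

Definition time_avg_limit (g : R -> R) (l : R) : Prop :=
  (forall K, 0 < K -> inhabited (Riemann_integrable g 0 K)) /\
  (forall eps, 0 < eps -> exists K0, forall K (pr : Riemann_integrable g 0 K),
      K0 < K -> 0 < K -> Rabs (RiemannInt pr / K - l) < eps).

(* Main.v *)
From Pilot Require Import Defs.
From Stdlib Require Import Reals.
From Stdlib Require Import Lra Lia Arith List ClassicalEpsilon Ring Field.
Import ListNotations.
Open Scope R_scope.

Notation CC1 := Pilot.Defs.C1.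
Lemma Ceq : forall x y : Cplx, re x = re y -> im x = im y -> x = y.
Proof. intros [a b] [c e]; simpl; intros; subst; reflexivity. Qed.

Definition Copp (x : Cplx) : Cplx := mkC (- re x) (- im x).

Lemma Cring_theory : ring_theory C0 CC1 Cadd Cmul Csub Copp (@eq Cplx).
Proof.
  constructor; intros; apply Ceq; destruct x; try destruct y; try destruct z;
  unfold Cadd, Cmul, Csub, Copp, C0, CC1; simpl; ring.
Qed.
Add Ring Cring : Cring_theory.

Lemma Cexample : forall x y, Cmul (Cadd x y) x = Cadd (Cmul x x) (Cmul y x).
Proof. intros; ring. Qed.

Lemma Cconj_mul : forall x y, Cconj (Cmul x y) = Cmul (Cconj x) (Cconj y).
Proof. intros [a b] [c e]; apply Ceq; simpl; ring. Qed.
Lemma Cconj_add : forall x y, Cconj (Cadd x y) = Cadd (Cconj x) (Cconj y).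
Proof. intros [a b] [c e]; apply Ceq; simpl; ring. Qed.
Lemma Cconj_sub : forall x y, Cconj (Csub x y) = Csub (Cconj x) (Cconj y).
Proof. intros [a b] [c e]; apply Ceq; simpl; ring. Qed.
Lemma Cconj_conj : forall x, Cconj (Cconj x) = x.
Proof. intros [a b]; apply Ceq; simpl; ring. Qed.
Lemma Cconj_C0 : Cconj C0 = C0.
Proof. apply Ceq; simpl; ring. Qed.
Lemma Cconj_C1 : Cconj CC1 = CC1.
Proof. apply Ceq; simpl; ring. Qed.
Lemma Cconj_CR : forall r, Cconj (CR r) = CR r.
Proof. intros; apply Ceq; simpl; ring. Qed.
Lemma Cmul_conj : forall x, Cmul x (Cconj x) = CR (Cnorm2 x).
Proof. intros [a b]; apply Ceq; unfold Cnorm2; simpl; ring. Qed.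
Lemma Cmul_conj' : forall x, Cmul (Cconj x) x = CR (Cnorm2 x).
Proof. intros [a b]; apply Ceq; unfold Cnorm2; simpl; ring. Qed.
Lemma CR_mul : forall a b, CR (a * b) = Cmul (CR a) (CR b).
Proof. intros; apply Ceq; simpl; ring. Qed.
Lemma CR_add : forall a b, CR (a + b) = Cadd (CR a) (CR b).
Proof. intros; apply Ceq; simpl; ring. Qed.
Lemma CR_0 : CR 0 = C0. Proof. apply Ceq; simpl; ring. Qed.
Lemma CR_1 : CR 1 = CC1. Proof. apply Ceq; simpl; ring. Qed.
Lemma Cnorm2_mul : forall x y, Cnorm2 (Cmul x y) = Cnorm2 x * Cnorm2 y.
Proof. intros [a b] [c e]; unfold Cnorm2; simpl; ring. Qed.
Lemma Cnorm2_conj : forall x, Cnorm2 (Cconj x) = Cnorm2 x.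
Proof. intros [a b]; unfold Cnorm2; simpl; ring. Qed.
Lemma Cnorm2_nonneg : forall x, 0 <= Cnorm2 x.
Proof. intros [a b]; unfold Cnorm2; simpl; nra. Qed.
Lemma Cnorm2_C0 : Cnorm2 C0 = 0.
Proof. unfold Cnorm2; simpl; ring. Qed.
Lemma Cnorm2_CR : forall r, Cnorm2 (CR r) = r * r.
Proof. intros; unfold Cnorm2; simpl; ring. Qed.
Lemma Cnorm2_zero : forall x, Cnorm2 x = 0 -> x = C0.
Proof. intros [a b]; unfold Cnorm2; simpl; intros H; apply Ceq; simpl; nra. Qed.
Lemma Cexpi_norm : forall t, Cnorm2 (Cexpi t) = 1.
Proof. intros; unfold Cnorm2, Cexpi; simpl. rewrite Rplus_comm. rewrite <- (sin2_cos2 t). unfold Rsqr; ring. Qed.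
Lemma Cmul_expi_conj : forall t, Cmul (Cexpi t) (Cconj (Cexpi t)) = CC1.
Proof. intros; rewrite Cmul_conj, Cexpi_norm; apply CR_1. Qed.

Lemma Csum_ext : forall n F G, (forall i, (i < n)%nat -> F i = G i) -> Csum n F = Csum n G.
Proof. induction n; intros; simpl; auto. rewrite (IHn F G) by auto. rewrite H by lia; auto. Qed.
Lemma Rsum_ext : forall n F G, (forall i, (i < n)%nat -> F i = G i) -> Rsum n F = Rsum n G.
Proof. induction n; intros; simpl; auto. rewrite (IHn F G) by auto. rewrite H by lia; auto. Qed.
Lemma Csum_add : forall n F G, Csum n (fun i => Cadd (F i) (G i)) = Cadd (Csum n F) (Csum n G).
Proof. induction n; intros; simpl. apply Ceq; simpl; ring. rewrite IHn; ring. Qed.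
Lemma Rsum_add : forall n F G, Rsum n (fun i => F i + G i) = Rsum n F + Rsum n G.
Proof. induction n; intros; simpl. ring. rewrite IHn; ring. Qed.
Lemma Rsum_sub : forall n F G, Rsum n (fun i => F i - G i) = Rsum n F - Rsum n G.
Proof. induction n; intros; simpl. ring. rewrite IHn; ring. Qed.
Lemma Csum_mull : forall n z F, Cmul z (Csum n F) = Csum n (fun i => Cmul z (F i)).
Proof. induction n; intros; simpl. apply Ceq; simpl; ring. rewrite <- IHn; ring. Qed.
Lemma Csum_mulr : forall n z F, Cmul (Csum n F) z = Csum n (fun i => Cmul (F i) z).
Proof. induction n; intros; simpl. apply Ceq; simpl; ring. rewrite <- IHn; ring. Qed.
Lemma Rsum_mull : forall n z F, z * Rsum n F = Rsum n (fun i => z * F i).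
Proof. induction n; intros; simpl. ring. rewrite <- IHn; ring. Qed.
Lemma Csum_swap : forall n m F,
  Csum n (fun i => Csum m (F i)) = Csum m (fun j => Csum n (fun i => F i j)).
Proof.
  induction n; intros; simpl.
  - induction m; simpl; auto. rewrite <- IHm. apply Ceq; simpl; ring.
  - rewrite IHn. rewrite <- Csum_add. reflexivity.
Qed.
Lemma Rsum_swap : forall n m F,
  Rsum n (fun i => Rsum m (F i)) = Rsum m (fun j => Rsum n (fun i => F i j)).
Proof.
  induction n; intros; simpl.
  - induction m; simpl; auto. rewrite <- IHm. ring.
  - rewrite IHn. rewrite <- Rsum_add. reflexivity.
Qed.
Lemma Csum_zero : forall n F, (forall i, (i < n)%nat -> F i = C0) -> Csum n F = C0.
Proof. induction n; intros; simpl; auto. rewrite IHn by auto. rewrite H by lia. apply Ceq; simpl; ring. Qed.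
Lemma Rsum_zero : forall n F, (forall i, (i < n)%nat -> F i = 0) -> Rsum n F = 0.
Proof. induction n; intros; simpl; auto. rewrite IHn by auto. rewrite H by lia. ring. Qed.
Lemma Csum_single : forall n F j, (j < n)%nat ->
  (forall i, (i < n)%nat -> i <> j -> F i = C0) -> Csum n F = F j.
Proof.
  induction n; intros; [lia|]. simpl.
  destruct (Nat.eq_dec j n).
  - subst. rewrite Csum_zero. apply Ceq; simpl; ring. intros; apply H0; lia.
  - rewrite (IHn F j) by (auto; lia). rewrite (H0 n) by lia. apply Ceq; simpl; ring.
Qed.
Lemma Rsum_single : forall n F j, (j < n)%nat ->
  (forall i, (i < n)%nat -> i <> j -> F i = 0) -> Rsum n F = F j.
Proof.
  induction n; intros; [lia|]. simpl.
  destruct (Nat.eq_dec j n).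
  - subst. rewrite Rsum_zero. ring. intros; apply H0; lia.
  - rewrite (IHn F j) by (auto; lia). rewrite (H0 n) by lia. ring.
Qed.
Lemma Cconj_sum : forall n F, Cconj (Csum n F) = Csum n (fun i => Cconj (F i)).
Proof. induction n; intros; simpl. apply Cconj_C0. rewrite Cconj_add, IHn; auto. Qed.
Lemma re_sum : forall n F, re (Csum n F) = Rsum n (fun i => re (F i)).
Proof. induction n; intros; simpl; auto. rewrite IHn; auto. Qed.
Lemma im_sum : forall n F, im (Csum n F) = Rsum n (fun i => im (F i)).
Proof. induction n; intros; simpl; auto. rewrite IHn; auto. Qed.
Lemma CR_sum : forall n F, CR (Rsum n F) = Csum n (fun i => CR (F i)).
Proof. induction n; intros; simpl. apply CR_0. rewrite CR_add, IHn; auto. Qed.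
Lemma Csum_split : forall m k F, Csum (m + k) F = Cadd (Csum m F) (Csum k (fun i => F (m + i)%nat)).
Proof. induction k; intros. simpl. rewrite Nat.add_0_r. apply Ceq; simpl; ring.
  rewrite Nat.add_succ_r. simpl. rewrite IHk. ring. Qed.
Lemma Rsum_split : forall m k F, Rsum (m + k) F = Rsum m F + Rsum k (fun i => F (m + i)%nat).
Proof. induction k; intros. simpl. rewrite Nat.add_0_r. ring.
  rewrite Nat.add_succ_r. simpl. rewrite IHk. ring. Qed.
Lemma Rsum_le : forall n F G, (forall i, (i < n)%nat -> F i <= G i) -> Rsum n F <= Rsum n G.
Proof. induction n; intros; simpl. lra. apply Rplus_le_compat; auto. Qed.
Lemma Rsum_nonneg : forall n F, (forall i, (i < n)%nat -> 0 <= F i) -> 0 <= Rsum n F.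
Proof. intros. replace 0 with (Rsum n (fun _ => 0)). apply Rsum_le; auto. apply Rsum_zero; auto. Qed.
Lemma Rsum_const : forall n c, Rsum n (fun _ => c) = INR n * c.
Proof. induction n; intros. simpl. ring. rewrite S_INR. simpl. rewrite IHn; ring. Qed.
Lemma Rsum_shift : forall n F, Rsum (S n) F = F O + Rsum n (fun i => F (S i)).
Proof. induction n; intros; simpl. ring. simpl in IHn. rewrite IHn. ring. Qed.
Lemma Rsum_rev : forall n g, Rsum n (fun i => g (n - 1 - i)%nat) = Rsum n g.
Proof.
  induction n; intros; auto.
  rewrite Rsum_shift. simpl (S n - 1 - 0)%nat. rewrite Nat.sub_0_r.
  change (Rsum (S n) g) with (Rsum n g + g n).
  rewrite <- (IHn g). rewrite Rplus_comm. f_equal. apply Rsum_ext; intros. f_equal. lia. f_equal; lia.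
Qed.

Definition cin (N : nat) (x y : nat -> Cplx) : Cplx := Csum N (fun b => Cmul (Cconj (x b)) (y b)).

Lemma cin_conj : forall N x y, cin N y x = Cconj (cin N x y).
Proof. intros; unfold cin; rewrite Cconj_sum; apply Csum_ext; intros.
  rewrite Cconj_mul, Cconj_conj; ring. Qed.
Lemma cin_sub_r : forall N x y z, cin N x (fun b => Csub (y b) (z b)) = Csub (cin N x y) (cin N x z).
Proof. intros; unfold cin.
  replace (Csub (Csum N (fun b => Cmul (Cconj (x b)) (y b))) (Csum N (fun b => Cmul (Cconj (x b)) (z b))))
  with (Cadd (Csum N (fun b => Cmul (Cconj (x b)) (y b))) (Cmul (CR (-1)) (Csum N (fun b => Cmul (Cconj (x b)) (z b))))).
  rewrite Csum_mull, <- Csum_add. apply Csum_ext; intros. apply Ceq; simpl; ring.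
  apply Ceq; simpl; ring. Qed.
Lemma cin_sum_r : forall N m x a (ph : nat -> nat -> Cplx),
  cin N x (fun b => Csum m (fun j => Cmul (a j) (ph j b))) = Csum m (fun j => Cmul (a j) (cin N x (ph j))).
Proof. intros; unfold cin.
  rewrite (Csum_ext N _ (fun b => Csum m (fun j => Cmul (Cconj (x b)) (Cmul (a j) (ph j b))))).
  rewrite Csum_swap. apply Csum_ext; intros. rewrite Csum_mull. apply Csum_ext; intros. ring.
  intros. rewrite Csum_mull. auto. Qed.
Lemma cin_self : forall N x, cin N x x = CR (Rsum N (fun b => Cnorm2 (x b))).
Proof. intros; unfold cin. rewrite CR_sum. apply Csum_ext; intros. apply Cmul_conj'. Qed.
Lemma cin_self_re : forall N x, re (cin N x x) = Rsum N (fun b => Cnorm2 (x b)).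
Proof. intros. rewrite cin_self. reflexivity. Qed.
Lemma Rsum_Cnorm2_nonneg : forall N x, 0 <= Rsum N (fun b => Cnorm2 (x b)).
Proof. intros; apply Rsum_nonneg; intros; apply Cnorm2_nonneg. Qed.

Definition delta (j j' : nat) : Cplx := if Nat.eqb j j' then CC1 else C0.

Lemma Csum_delta : forall m j a, (j < m)%nat -> Csum m (fun j' => Cmul (a j') (delta j j')) = a j.
Proof. intros. rewrite (Csum_single _ _ j); auto. unfold delta. rewrite Nat.eqb_refl. ring.
  intros. unfold delta. destruct (Nat.eqb_spec j i); [lia|]. ring. Qed.

Lemma bessel : forall N m (ph : nat -> nat -> Cplx) g,
  (forall j j', (j < m)%nat -> (j' < m)%nat -> cin N (ph j) (ph j') = delta j j') ->
  Rsum m (fun j => Cnorm2 (cin N (ph j) g)) <= Rsum N (fun b => Cnorm2 (g b)).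
Proof.
  intros N m ph g Hon.
  set (al := fun j => cin N (ph j) g).
  set (r := fun b => Csub (g b) (Csum m (fun j => Cmul (al j) (ph j b)))).
  assert (H1 : forall j, (j < m)%nat -> cin N (ph j) r = C0).
  { intros. unfold r. rewrite cin_sub_r, cin_sum_r.
    rewrite (Csum_ext _ _ (fun j' => Cmul (al j') (delta j j'))).
    rewrite Csum_delta; auto. unfold al. apply Ceq; simpl; ring.
    intros; rewrite Hon; auto. }
  assert (Ha : cin N r r = Csub (cin N r g) (Csum m (fun j => Cmul (al j) (cin N r (ph j))))).
  { change (cin N r r) with (cin N r (fun b => Csub (g b) (Csum m (fun j => Cmul (al j) (ph j b))))).
    rewrite cin_sub_r, cin_sum_r. reflexivity. }
  assert (Hb : Csum m (fun j => Cmul (al j) (cin N r (ph j))) = C0).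
  { apply Csum_zero. intros. rewrite cin_conj, H1; auto. rewrite Cconj_C0. ring. }
  assert (Hc : cin N r g = Csub (cin N g g) (Csum m (fun j => Cmul (Cconj (al j)) (al j)))).
  { rewrite cin_conj. unfold r. rewrite cin_sub_r, cin_sum_r. rewrite Cconj_sub, Cconj_sum.
    rewrite <- cin_conj. f_equal. apply Csum_ext; intros. rewrite Cconj_mul, <- cin_conj. reflexivity. }
  assert (H2 : cin N r r = Csub (cin N g g) (CR (Rsum m (fun j => Cnorm2 (al j))))).
  { rewrite Ha, Hb, Hc, CR_sum. 
    rewrite (Csum_ext m _ (fun j => CR (Cnorm2 (al j)))). apply Ceq; simpl; ring.
    intros; apply Cmul_conj'. }
  assert (H3 := cin_self_re N r). rewrite H2 in H3. simpl in H3.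
  rewrite cin_self in H3. simpl in H3.
  pose proof (Rsum_Cnorm2_nonneg N r). unfold al in H3. lra.
Qed.

Lemma cauchy_schwarz : forall N x y,
  re (cin N x x) = 1 -> Cnorm2 (cin N x y) <= Rsum N (fun b => Cnorm2 (y b)).
Proof.
  intros. pose proof (bessel N 1 (fun _ => x) y).
  simpl in H0. rewrite Rplus_0_l in H0. apply H0.
  intros. replace j with 0%nat by lia. replace j' with 0%nat by lia. unfold delta; simpl.
  rewrite cin_self. rewrite cin_self_re in H. rewrite H. apply CR_1.
Qed.

Fixpoint Upow (N : nat) (u : nat -> nat -> Cplx) (t : nat) (a c : nat) : Cplx :=
  match t with
  | O => delta a c
  | S t' => Csum N (fun x => Cmul (u a x) (Upow N u t' x c))
  end.

Lemma Upow_1 : forall N u a c, (c < N)%nat -> Upow N u 1 a c = u a c.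
Proof. intros; simpl. rewrite (Csum_single _ _ c); auto. unfold delta; rewrite Nat.eqb_refl; ring.
  intros; unfold delta. destruct (Nat.eqb_spec i c); [lia|ring]. Qed.

Lemma Upow_right : forall N u t a c, (a < N)%nat -> (c < N)%nat ->
  Upow N u (S t) a c = Csum N (fun x => Cmul (Upow N u t a x) (u x c)).
Proof.
  induction t; intros.
  - rewrite Upow_1 by auto. simpl. rewrite (Csum_single _ _ a); auto. unfold delta; rewrite Nat.eqb_refl; ring.
    intros; unfold delta. destruct (Nat.eqb_spec a i); [lia|ring].
  - change (Upow N u (S (S t)) a c) with (Csum N (fun x => Cmul (u a x) (Upow N u (S t) x c))).
    rewrite (Csum_ext _ _ (fun x => Csum N (fun y => Cmul (u a x) (Cmul (Upow N u t x y) (u y c))))).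
    rewrite Csum_swap. apply Csum_ext; intros y Hy.
    change (Upow N u (S t) a y) with (Csum N (fun x => Cmul (u a x) (Upow N u t x y))).
    rewrite Csum_mulr. apply Csum_ext; intros; ring.
    intros x Hx. rewrite IHt by auto. rewrite Csum_mull. auto.
Qed.

Definition RowU (N : nat) (u : nat -> nat -> Cplx) :=
  forall b b', (b < N)%nat -> (b' < N)%nat -> Csum N (fun c => Cmul (u b c) (Cconj (u b' c))) = delta b b'.
Definition ColU (N : nat) (u : nat -> nat -> Cplx) :=
  forall c c', (c < N)%nat -> (c' < N)%nat -> Csum N (fun b => Cmul (Cconj (u b c)) (u b c')) = delta c c'.

Definition Qm N u s s' a a' := Csum N (fun c => Cmul (Upow N u s a c) (Cconj (Upow N u s' a' c))).

Lemma Q_step : forall N u s s' a a', RowU N u -> (a < N)%nat -> (a' < N)%nat ->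
  Qm N u (S s) (S s') a a' = Qm N u s s' a a'.
Proof.
  intros. unfold Qm.
  rewrite (Csum_ext _ _ (fun c => Csum N (fun x => Csum N (fun y =>
      Cmul (Cmul (Upow N u s a x) (Cconj (Upow N u s' a' y))) (Cmul (u x c) (Cconj (u y c))))))).
  - rewrite Csum_swap. apply Csum_ext; intros x Hx.
    rewrite Csum_swap.
    rewrite (Csum_ext _ _ (fun y => Cmul (Cmul (Upow N u s a x) (Cconj (Upow N u s' a' y))) (delta x y))).
    + rewrite (Csum_single _ _ x); auto. unfold delta; rewrite Nat.eqb_refl; ring.
      intros; unfold delta. destruct (Nat.eqb_spec x i); [lia|ring].
    + intros y Hy. rewrite <- Csum_mull. rewrite H; auto.
  - intros c Hc. rewrite !Upow_right by auto. rewrite Cconj_sum. rewrite Csum_mulr.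
    apply Csum_ext; intros x Hx. rewrite Csum_mull. apply Csum_ext; intros y Hy.
    rewrite Cconj_mul. ring.
Qed.

Lemma Q_s0 : forall N u s a a', (a' < N)%nat -> Qm N u s 0 a a' = Upow N u s a a'.
Proof. intros; unfold Qm; simpl. rewrite (Csum_single _ _ a'); auto.
  unfold delta; rewrite Nat.eqb_refl, Cconj_C1; ring.
  intros; unfold delta. destruct (Nat.eqb_spec a' i); [lia|]. rewrite Cconj_C0; ring. Qed.
Lemma Q_0s : forall N u s a a', (a < N)%nat -> Qm N u 0 s a a' = Cconj (Upow N u s a' a).
Proof. intros; unfold Qm; simpl. rewrite (Csum_single _ _ a); auto.
  unfold delta; rewrite Nat.eqb_refl; ring.
  intros; unfold delta. destruct (Nat.eqb_spec a i); [lia|]. ring. Qed.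

Lemma Q_diff1 : forall N u k s a a', RowU N u -> (a < N)%nat -> (a' < N)%nat ->
  Qm N u (k + s) s a a' = Upow N u k a a'.
Proof. induction s; intros. rewrite Nat.add_0_r; apply Q_s0; auto.
  rewrite Nat.add_succ_r, Q_step; auto. Qed.
Lemma Q_diff2 : forall N u k s a a', RowU N u -> (a < N)%nat -> (a' < N)%nat ->
  Qm N u s (k + s) a a' = Cconj (Upow N u k a' a).
Proof. induction s; intros. rewrite Nat.add_0_r; apply Q_0s; auto.
  rewrite Nat.add_succ_r, Q_step; auto. Qed.

Lemma Upow_rownorm : forall N u t a, RowU N u -> (a < N)%nat ->
  Rsum N (fun c => Cnorm2 (Upow N u t a c)) = 1.
Proof. intros. pose proof (Q_diff1 N u 0 t a a H H0 H0). simpl in H1.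
  unfold delta in H1; rewrite Nat.eqb_refl in H1. unfold Qm in H1.
  rewrite (Csum_ext _ _ (fun c => CR (Cnorm2 (Upow N u t a c)))) in H1.
  rewrite <- CR_sum in H1. apply (f_equal re) in H1. simpl in H1. auto.
  intros; apply Cmul_conj. Qed.

Fixpoint Cpow (z : Cplx) (n : nat) : Cplx := match n with O => CC1 | S m => Cmul z (Cpow z m) end.

Lemma Cnorm2_Cpow : forall z n, Cnorm2 z = 1 -> Cnorm2 (Cpow z n) = 1.
Proof. induction n; intros; simpl. unfold Cnorm2; simpl; ring. rewrite Cnorm2_mul, H, IHn; auto; ring. Qed.

Lemma cin_ext : forall N x y x' y', (forall b, (b < N)%nat -> x b = x' b) ->
  (forall b, (b < N)%nat -> y b = y' b) -> cin N x y = cin N x' y'.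
Proof. intros; unfold cin; apply Csum_ext; intros; rewrite H, H0; auto. Qed.

Lemma eig_norm : forall N u (ph : nat -> Cplx) lam, ColU N u ->
  re (cin N ph ph) = 1 ->
  (forall b, (b < N)%nat -> Csum N (fun c => Cmul (u b c) (ph c)) = Cmul lam (ph b)) ->
  Cnorm2 lam = 1.
Proof.
  intros N u ph lam HC Hn He.
  assert (E : cin N (fun b => Csum N (fun c => Cmul (u b c) (ph c))) (fun b => Csum N (fun c => Cmul (u b c) (ph c)))
              = cin N ph ph).
  { unfold cin. rewrite (Csum_ext _ _ (fun b => Csum N (fun c => Csum N (fun c' =>
        Cmul (Cmul (Cconj (ph c)) (ph c')) (Cmul (Cconj (u b c)) (u b c')))))).
    rewrite Csum_swap. apply Csum_ext; intros c Hc. rewrite Csum_swap.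
    rewrite (Csum_ext _ _ (fun c' => Cmul (Cmul (Cconj (ph c)) (ph c')) (delta c c'))).
    rewrite (Csum_single _ _ c); auto. unfold delta; rewrite Nat.eqb_refl; ring.
    intros; unfold delta. destruct (Nat.eqb_spec c i); [lia|ring].
    intros c' Hc'. rewrite <- Csum_mull, HC; auto.
    intros b Hb. rewrite Cconj_sum, Csum_mulr. apply Csum_ext; intros c Hc.
    rewrite Csum_mull. apply Csum_ext; intros. rewrite Cconj_mul. ring. }
  rewrite (cin_ext N _ _ (fun b => Cmul lam (ph b)) (fun b => Cmul lam (ph b))) in E by auto.
  unfold cin in E. rewrite (Csum_ext N _ (fun b => Cmul (CR (Cnorm2 lam)) (Cmul (Cconj (ph b)) (ph b)))) in E.
  rewrite <- Csum_mull in E. fold (cin N ph ph) in E. rewrite cin_self in E, Hn. simpl in Hn.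
  rewrite Hn in E. apply (f_equal re) in E. simpl in E. lra.
  intros. rewrite Cconj_mul, <- (Cmul_conj' lam). ring.
Qed.

Lemma Upow_eig : forall N u (ph : nat -> Cplx) lam t b, (b < N)%nat ->
  (forall b, (b < N)%nat -> Csum N (fun c => Cmul (u b c) (ph c)) = Cmul lam (ph b)) ->
  Csum N (fun c => Cmul (Upow N u t b c) (ph c)) = Cmul (Cpow lam t) (ph b).
Proof.
  induction t; intros.
  - simpl. rewrite (Csum_single _ _ b); auto. unfold delta; rewrite Nat.eqb_refl; ring.
    intros; unfold delta. destruct (Nat.eqb_spec b i); [lia|ring].
  - simpl. rewrite (Csum_ext _ _ (fun c => Csum N (fun x => Cmul (u b x) (Cmul (Upow N u t x c) (ph c))))).
    rewrite Csum_swap. rewrite (Csum_ext _ _ (fun x => Cmul (u b x) (Cmul (Cpow lam t) (ph x)))).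
    rewrite (Csum_ext _ _ (fun x => Cmul (Cpow lam t) (Cmul (u b x) (ph x)))) by (intros; ring).
    rewrite <- Csum_mull, H0 by auto. ring.
    intros x Hx. rewrite <- Csum_mull, IHt; auto.
    intros. rewrite Csum_mulr. apply Csum_ext; intros; ring.
Qed.

Lemma Csum_prod : forall n m F G,
  Csum n (fun b => Csum m (fun c => Cmul (F b) (G c))) = Cmul (Csum n F) (Csum m G).
Proof. intros. rewrite Csum_mulr. apply Csum_ext; intros. rewrite Csum_mull. auto. Qed.

Definition Bf N (ph : nat -> Cplx) (Mx : nat -> nat -> Cplx) :=
  Csum N (fun b => Csum N (fun c => Cmul (Cmul (Cconj (ph b)) (Mx b c)) (ph c))).

Lemma Bf_cin : forall N ph Mx, cin N ph (fun b => Csum N (fun c => Cmul (Mx b c) (ph c))) = Bf N ph Mx.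
Proof. intros; unfold cin, Bf. apply Csum_ext; intros. rewrite Csum_mull. apply Csum_ext; intros; ring. Qed.

Lemma Bf_lin : forall N ph z T (M : nat -> nat -> nat -> Cplx),
  Bf N ph (fun b c => Cmul z (Csum T (fun s => M s b c))) = Cmul z (Csum T (fun s => Bf N ph (M s))).
Proof.
  intros; unfold Bf.
  transitivity (Csum N (fun b => Csum T (fun s => Csum N (fun c => Cmul z (Cmul (Cmul (Cconj (ph b)) (M s b c)) (ph c)))))).
  - apply Csum_ext; intros b Hb. rewrite <- Csum_swap. apply Csum_ext; intros c Hc.
    transitivity (Cmul (Cmul z (Cmul (Cconj (ph b)) (ph c))) (Csum T (fun s => M s b c))). ring.
    rewrite Csum_mull; apply Csum_ext; intros; ring.
  - rewrite Csum_swap. rewrite Csum_mull. apply Csum_ext; intros s Hs.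
    rewrite Csum_mull. apply Csum_ext; intros. rewrite Csum_mull; auto.
Qed.

Lemma Bf_rank : forall N ph f (V : nat -> nat -> Cplx),
  Bf N ph (fun b c => Csum N (fun a => Cmul (Cmul (Cconj (V a b)) (f a)) (V a c)))
  = Csum N (fun a => Cmul (f a) (Cmul (Cconj (Csum N (fun b => Cmul (V a b) (ph b))))
                                     (Csum N (fun c => Cmul (V a c) (ph c))))).
Proof.
  intros; unfold Bf.
  rewrite (Csum_ext N _ (fun b => Csum N (fun a => Csum N (fun c =>
      Cmul (f a) (Cmul (Cconj (Cmul (V a b) (ph b))) (Cmul (V a c) (ph c))))))).
  rewrite Csum_swap. apply Csum_ext; intros a Ha. symmetry. rewrite Cconj_sum.
  rewrite <- Csum_prod. rewrite Csum_mull. apply Csum_ext; intros. rewrite Csum_mull; auto.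
  intros b Hb. rewrite (Csum_ext N _ (fun c => Csum N (fun a => Cmul (f a) (Cmul (Cconj (Cmul (V a b) (ph b))) (Cmul (V a c) (ph c)))))).
  apply Csum_swap. intros c Hc.
  transitivity (Cmul (Cmul (Cconj (ph b)) (ph c)) (Csum N (fun a => Cmul (Cmul (Cconj (V a b)) (f a)) (V a c)))). ring.
  rewrite Csum_mull. apply Csum_ext; intros. rewrite Cconj_mul. ring.
Qed.

Definition Gm N u f T (b c : nat) : Cplx :=
  Cmul (CR (1 / INR T)) (Csum T (fun s => Csum N (fun a =>
     Cmul (Cmul (Cconj (Upow N u s a b)) (f a)) (Upow N u s a c)))).

Lemma G_diag : forall N u f T (ph : nat -> Cplx) lam, (0 < T)%nat ->
  Cnorm2 lam = 1 ->
  (forall b, (b < N)%nat -> Csum N (fun c => Cmul (u b c) (ph c)) = Cmul lam (ph b)) ->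
  cin N ph (fun b => Csum N (fun c => Cmul (Gm N u f T b c) (ph c)))
  = cin N ph (fun b => Cmul (f b) (ph b)).
Proof.
  intros. rewrite Bf_cin. unfold Gm. rewrite Bf_lin.
  rewrite (Csum_ext T _ (fun s => Cmul (CR 1) (cin N ph (fun b => Cmul (f b) (ph b))))).
  - rewrite <- Csum_mulr, <- CR_sum, Rsum_const.
    assert (HT : INR T <> 0) by (apply not_0_INR; lia).
    apply Ceq; simpl; field; auto.
  - intros s Hs. rewrite Bf_rank. rewrite CR_1. transitivity (cin N ph (fun b => Cmul (f b) (ph b))); [|ring].
    unfold cin. apply Csum_ext; intros a Ha.
    rewrite !Upow_eig with (lam := lam) by auto.
    rewrite Cconj_mul. 
    transitivity (Cmul (Cmul (Cconj (Cpow lam s)) (Cpow lam s)) (Cmul (Cconj (ph a)) (Cmul (f a) (ph a)))). ring.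
    rewrite Cmul_conj', Cnorm2_Cpow by auto. rewrite CR_1. ring.
Qed.

Lemma hs_bound : forall N m (ph : nat -> nat -> Cplx) Mx,
  (forall j j', (j < m)%nat -> (j' < m)%nat -> cin N (ph j) (ph j') = delta j j') ->
  Rsum m (fun j => Cnorm2 (cin N (ph j) (fun b => Csum N (fun c => Cmul (Mx b c) (ph j c)))))
  <= Rsum N (fun b => Rsum N (fun c => Cnorm2 (Mx b c))).
Proof.
  intros N m ph Mx Hon.
  apply Rle_trans with (Rsum m (fun j => Rsum N (fun b => Cnorm2 (cin N (ph j) (fun c => Cconj (Mx b c)))))).
  - apply Rsum_le; intros j Hj. eapply Rle_trans. apply cauchy_schwarz.
    rewrite Hon by auto. unfold delta; rewrite Nat.eqb_refl; reflexivity.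
    right. apply Rsum_ext; intros b Hb. rewrite <- Cnorm2_conj. f_equal.
    unfold cin. rewrite Cconj_sum. apply Csum_ext; intros. rewrite Cconj_mul. ring.
  - rewrite Rsum_swap. apply Rsum_le; intros b Hb.
    eapply Rle_trans. apply bessel; auto. right. apply Rsum_ext; intros; apply Cnorm2_conj.
Qed.

Lemma Csum_swap3 : forall n m p F,
  Csum n (fun i => Csum m (fun j => Csum p (fun k => F i j k)))
  = Csum m (fun j => Csum p (fun k => Csum n (fun i => F i j k))).
Proof. intros. rewrite Csum_swap. apply Csum_ext; intros. apply Csum_swap. Qed.

Lemma hs_rank : forall N f (V V' : nat -> nat -> Cplx),
  Csum N (fun b => Csum N (fun c =>
     Cmul (Csum N (fun a => Cmul (Cmul (Cconj (V a b)) (f a)) (V a c)))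
          (Cconj (Csum N (fun a' => Cmul (Cmul (Cconj (V' a' b)) (f a')) (V' a' c))))))
  = Csum N (fun a => Csum N (fun a' => Cmul (Cmul (f a) (Cconj (f a')))
        (Cmul (Cconj (Csum N (fun b => Cmul (V a b) (Cconj (V' a' b)))))
              (Csum N (fun c => Cmul (V a c) (Cconj (V' a' c))))))).
Proof.
  intros.
  transitivity (Csum N (fun b => Csum N (fun c => Csum N (fun a => Csum N (fun a' =>
      Cmul (Cmul (f a) (Cconj (f a'))) (Cmul (Cconj (Cmul (V a b) (Cconj (V' a' b)))) (Cmul (V a c) (Cconj (V' a' c))))))))).
  - apply Csum_ext; intros b Hb. apply Csum_ext; intros c Hc.
    rewrite Cconj_sum, Csum_mulr. apply Csum_ext; intros a Ha. rewrite Csum_mull.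
    apply Csum_ext; intros a' Ha'. rewrite !Cconj_mul, !Cconj_conj. ring.
  - rewrite (Csum_ext N _ (fun b => Csum N (fun a => Csum N (fun a' => Csum N (fun c =>
      Cmul (Cmul (f a) (Cconj (f a'))) (Cmul (Cconj (Cmul (V a b) (Cconj (V' a' b)))) (Cmul (V a c) (Cconj (V' a' c))))))))).
    rewrite Csum_swap3. apply Csum_ext; intros a Ha. apply Csum_ext; intros a' Ha'.
    rewrite Cconj_sum, <- Csum_prod, Csum_mull. apply Csum_ext; intros. rewrite Csum_mull. auto.
    intros b Hb. apply Csum_swap3.
Qed.

Definition Kss N u f s s' : R :=
  re (Csum N (fun a => Csum N (fun a' => Cmul (Cmul (f a) (Cconj (f a'))) (CR (Cnorm2 (Qm N u s s' a a')))))).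

Definition Pm N u (f : nat -> Cplx) s b c := Csum N (fun a => Cmul (Cmul (Cconj (Upow N u s a b)) (f a)) (Upow N u s a c)).

Lemma hs_G : forall N u f T,
  Rsum N (fun b => Rsum N (fun c => Cnorm2 (Gm N u f T b c)))
  = (1 / INR T) * (1 / INR T) * Rsum T (fun s => Rsum T (fun s' => Kss N u f s s')).
Proof.
  intros.
  pose (P := Pm N u f).
  assert (HG : forall b c, Gm N u f T b c = Cmul (CR (1 / INR T)) (Csum T (fun s => P s b c))) by reflexivity.
  assert (E : Csum N (fun b => Csum N (fun c => Cmul (Gm N u f T b c) (Cconj (Gm N u f T b c))))
     = Cmul (CR ((1 / INR T) * (1 / INR T))) (Csum T (fun s => Csum T (fun s' =>
          Csum N (fun b => Csum N (fun c => Cmul (P s b c) (Cconj (P s' b c)))))))).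
  { 
    transitivity (Csum N (fun b => Csum N (fun c => Csum T (fun s => Csum T (fun s' =>
        Cmul (CR ((1 / INR T) * (1 / INR T))) (Cmul (P s b c) (Cconj (P s' b c)))))))).
    - apply Csum_ext; intros b Hb; apply Csum_ext; intros c Hc.
      rewrite HG. rewrite Cconj_mul, Cconj_CR, Cconj_sum, CR_mul.
      transitivity (Cmul (Cmul (CR (1 / INR T)) (CR (1 / INR T)))
        (Cmul (Csum T (fun s => P s b c)) (Csum T (fun s' => Cconj (P s' b c))))). ring.
      rewrite <- Csum_prod, Csum_mull. apply Csum_ext; intros. rewrite Csum_mull. apply Csum_ext; intros. auto.
    - rewrite (Csum_ext N _ (fun b => Csum T (fun s => Csum T (fun s' => Csum N (fun c =>
          Cmul (CR ((1 / INR T) * (1 / INR T))) (Cmul (P s b c) (Cconj (P s' b c)))))))).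
      rewrite Csum_swap3. rewrite Csum_mull. apply Csum_ext; intros s Hs. rewrite Csum_mull. apply Csum_ext; intros s' Hs'.
      rewrite Csum_mull. apply Csum_ext; intros. rewrite Csum_mull. auto.
      intros b Hb. apply Csum_swap3. }
  transitivity (re (Csum N (fun b => Csum N (fun c => Cmul (Gm N u f T b c) (Cconj (Gm N u f T b c)))))).
  - rewrite re_sum. apply Rsum_ext; intros. rewrite re_sum. apply Rsum_ext; intros.
    rewrite Cmul_conj. reflexivity.
  - rewrite E. simpl. rewrite Rmult_0_l, Rminus_0_r. f_equal.
    rewrite re_sum. apply Rsum_ext; intros s Hs. rewrite re_sum. apply Rsum_ext; intros s' Hs'.
    unfold P, Pm. rewrite hs_rank. unfold Kss. f_equal. apply Csum_ext; intros. apply Csum_ext; intros.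
    f_equal. rewrite Cmul_conj'. reflexivity.
Qed.

Definition hh N u (f : nat -> Cplx) t : R :=
  Rsum N (fun a => Rsum N (fun a' => Cnorm2 (Upow N u t a a') * re (Cmul (Cconj (f a)) (f a')))).

Definition hdist (h : nat -> R) (s s' : nat) : R := if Nat.leb s' s then h (s - s')%nat else h (s' - s)%nat.

Lemma Kss_hh : forall N u f s s', RowU N u -> Kss N u f s s' = hdist (hh N u f) s s'.
Proof.
  intros. unfold Kss, hdist, hh. rewrite re_sum.
  destruct (Nat.leb_spec s' s).
  - apply Rsum_ext; intros a Ha. rewrite re_sum. apply Rsum_ext; intros a' Ha'.
    replace s with ((s - s') + s')%nat at 1 by lia. rewrite Q_diff1 by auto.
    destruct (f a), (f a'); simpl. ring.
  - rewrite Rsum_swap. apply Rsum_ext; intros a Ha. rewrite re_sum. apply Rsum_ext; intros a' Ha'.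
    replace s' with ((s' - s) + s)%nat at 1 by lia. rewrite Q_diff2 by auto.
    rewrite Cnorm2_conj. destruct (f a), (f a'); simpl. ring.
Qed.

Lemma dsum : forall (h : nat -> R) T,
  Rsum T (fun s => Rsum T (fun s' => hdist h s s'))
  = INR T * h O + 2 * Rsum T (fun i => (INR T - INR (S i)) * h (S i)).
Proof.
  intros h. induction T.
  - simpl. ring.
  - assert (E1 : forall s, Rsum (S T) (fun s' => hdist h s s') = Rsum T (fun s' => hdist h s s') + hdist h s T).
    { intros; reflexivity. }
    rewrite (Rsum_ext (S T) _ (fun s => Rsum T (fun s' => hdist h s s') + hdist h s T)) by auto.
    rewrite Rsum_add. simpl (Rsum (S T) (fun s => Rsum T (fun s' => hdist h s s'))).
    rewrite IHT.
    assert (E2 : Rsum T (fun s' => hdist h T s') = Rsum T (fun i => h (S i))).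
    { rewrite <- (Rsum_rev T (fun i => h (S i))). apply Rsum_ext; intros. unfold hdist. destruct (Nat.leb_spec i T); [|lia].
      f_equal. lia. }
    assert (E3 : Rsum T (fun s => hdist h s T) = Rsum T (fun i => h (S i))).
    { rewrite <- E2. apply Rsum_ext; intros. unfold hdist.
      destruct (Nat.leb_spec T i); [lia|]. destruct (Nat.leb_spec i T); [|lia]. auto. }
    change (Rsum (S T) (fun s => hdist h s T)) with (Rsum T (fun s => hdist h s T) + hdist h T T).
    rewrite E2, E3. unfold hdist. rewrite Nat.leb_refl, Nat.sub_diag.
    change (Rsum (S T) (fun i => (INR (S T) - INR (S i)) * h (S i)))
      with (Rsum T (fun i => (INR (S T) - INR (S i)) * h (S i)) + (INR (S T) - INR (S T)) * h (S T)).
    rewrite (Rsum_ext T (fun i => (INR (S T) - INR (S i)) * h (S i)) (fun i => (INR T - INR (S i)) * h (S i) + h (S i))).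
    rewrite Rsum_add. rewrite (S_INR T). ring.
    intros. rewrite (S_INR T). ring.
Qed.

Lemma hh0 : forall N u f, hh N u f 0 = Rsum N (fun a => Cnorm2 (f a)).
Proof.
  intros; unfold hh. apply Rsum_ext; intros a Ha. simpl.
  rewrite (Rsum_single _ _ a); auto. unfold delta; rewrite Nat.eqb_refl.
  destruct (f a); unfold Cnorm2; simpl; ring.
  intros; unfold delta. destruct (Nat.eqb_spec a i); [lia|]. rewrite Cnorm2_C0; ring.
Qed.

Lemma fixed_k_bound : forall N u f T (ph : nat -> nat -> Cplx) cst,
  RowU N u -> ColU N u -> (0 < T)%nat ->
  Csum N f = C0 ->
  (forall j j', (j < N)%nat -> (j' < N)%nat -> cin N (ph j) (ph j') = delta j j') ->
  (forall j, (j < N)%nat -> exists lam, forall b, (b < N)%nat ->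
       Csum N (fun c => Cmul (u b c) (ph j c)) = Cmul lam (ph j b)) ->
  Rsum N (fun j => Cnorm2 (Csub (cin N (ph j) (fun b => Cmul (f b) (ph j b))) (Cmul (CR cst) (Csum N f))))
  <= 1 / INR T * Rsum N (fun a => Cnorm2 (f a))
     + 2 * (1 / INR T * (1 / INR T)) * Rsum T (fun i => (INR T - INR (S i)) * hh N u f (S i)).
Proof.
  intros N u f T ph cst HR HC HT Hf Hon Heig.
  rewrite (Rsum_ext N _ (fun j => Cnorm2 (cin N (ph j) (fun b => Csum N (fun c => Cmul (Gm N u f T b c) (ph j c)))))).
  - eapply Rle_trans. apply hs_bound; auto. rewrite hs_G.
    rewrite (Rsum_ext T _ (fun s => Rsum T (fun s' => hdist (hh N u f) s s'))).
    rewrite dsum. rewrite hh0. right. assert (INR T <> 0) by (apply not_0_INR; lia). field. auto.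
    intros; apply Rsum_ext; intros; apply Kss_hh; auto.
  - intros j Hj. rewrite Hf. destruct (Heig j Hj) as [lam Hl].
    rewrite G_diag with (lam := lam); auto.
    f_equal. apply Ceq; simpl; ring.
    eapply eig_norm; eauto. rewrite Hon by auto. unfold delta; rewrite Nat.eqb_refl. reflexivity.
Qed.


Lemma ub_lt : forall B b, (b < 2 * B)%nat -> (ub B b < B)%nat.
Proof. intros; unfold ub. destruct (Nat.ltb_spec b B); lia. Qed.
Lemma revb_lt : forall B b, (b < 2 * B)%nat -> (revb B b < 2 * B)%nat.
Proof. intros; unfold revb. destruct (Nat.ltb_spec b B); lia. Qed.
Lemma revb_revb : forall B b, (b < 2 * B)%nat -> revb B (revb B b) = b.
Proof. intros; unfold revb. destruct (Nat.ltb_spec b B).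
  destruct (Nat.ltb_spec (b + B) B); lia. destruct (Nat.ltb_spec (b - B) B); lia. Qed.
Lemma ub_revb : forall B b, (b < 2 * B)%nat -> ub B (revb B b) = ub B b.
Proof. intros; unfold ub, revb. destruct (Nat.ltb_spec b B).
  destruct (Nat.ltb_spec (b + B) B); lia. destruct (Nat.ltb_spec (b - B) B); lia. Qed.
Lemma tb_revb : forall B e1 e2 b, (b < 2 * B)%nat -> tb B e1 e2 (revb B b) = ob B e1 e2 b.
Proof. intros; unfold tb, ob, revb. destruct (Nat.ltb_spec b B).
  destruct (Nat.ltb_spec (b + B) B); [lia|]. f_equal; lia.
  destruct (Nat.ltb_spec (b - B) B); lia. Qed.
Lemma ob_revb : forall B e1 e2 b, (b < 2 * B)%nat -> ob B e1 e2 (revb B b) = tb B e1 e2 b.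
Proof. intros; unfold tb, ob, revb. destruct (Nat.ltb_spec b B).
  destruct (Nat.ltb_spec (b + B) B); [lia|]. f_equal; lia.
  destruct (Nat.ltb_spec (b - B) B); lia. Qed.
Lemma revb_inj : forall B b b', (b < 2 * B)%nat -> (b' < 2 * B)%nat -> revb B b = revb B b' -> b = b'.
Proof. intros. rewrite <- (revb_revb B b), <- (revb_revb B b'), H1; auto. Qed.

Lemma ob_ne_tb : forall B e1 e2 n b, simple_graph B e1 e2 n -> (b < 2 * B)%nat ->
  ob B e1 e2 b <> tb B e1 e2 b.
Proof. intros B e1 e2 n b [H1 _] Hb. unfold ob, tb. destruct (Nat.ltb_spec b B).
  destruct (H1 b) as [_ [_ ?]]; auto. destruct (H1 (b - B)%nat) as [_ [_ ?]]; [lia|]. auto. Qed.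
Lemma ob_lt : forall B e1 e2 n b, simple_graph B e1 e2 n -> (b < 2 * B)%nat -> (ob B e1 e2 b < n)%nat.
Proof. intros B e1 e2 n b [H1 _] Hb. unfold ob. destruct (Nat.ltb_spec b B).
  apply H1; auto. apply H1; lia. Qed.
Lemma tb_lt : forall B e1 e2 n b, simple_graph B e1 e2 n -> (b < 2 * B)%nat -> (tb B e1 e2 b < n)%nat.
Proof. intros B e1 e2 n b [H1 _] Hb. unfold tb. destruct (Nat.ltb_spec b B).
  apply H1; auto. apply H1; lia. Qed.
Lemma inc_tb : forall B e1 e2 b, (b < 2 * B)%nat -> incidentb e1 e2 (tb B e1 e2 b) (ub B b) = true.
Proof. intros. unfold incidentb, tb, ub. destruct (Nat.ltb_spec b B); rewrite Nat.eqb_refl.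
  apply Bool.orb_true_r. reflexivity. Qed.
Lemma inc_ob : forall B e1 e2 b, (b < 2 * B)%nat -> incidentb e1 e2 (ob B e1 e2 b) (ub B b) = true.
Proof. intros. unfold incidentb, ob, ub. destruct (Nat.ltb_spec b B); rewrite Nat.eqb_refl.
  reflexivity. apply Bool.orb_true_r. Qed.
Lemma ub_eq : forall B b b', (b < 2 * B)%nat -> (b' < 2 * B)%nat -> ub B b = ub B b' ->
  b = b' \/ b' = revb B b.
Proof. intros. unfold ub, revb in *. destruct (Nat.ltb_spec b B), (Nat.ltb_spec b' B); lia. Qed.

Lemma split_ob : forall B e1 e2 n v (G : nat -> Cplx), simple_graph B e1 e2 n ->
  Csum (2 * B) (fun c => if Nat.eqb v (ob B e1 e2 c) then G (ub B c) else C0)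
  = Csum B (fun e => if incidentb e1 e2 v e then G e else C0).
Proof.
  intros B e1 e2 n v G [H1 _]. replace (2 * B)%nat with (B + B)%nat by lia. rewrite Csum_split.
  rewrite <- Csum_add. apply Csum_ext; intros e He. unfold ob, ub, incidentb.
  destruct (Nat.ltb_spec e B); [|lia]. destruct (Nat.ltb_spec (B + e) B); [lia|].
  replace (B + e - B)%nat with e by lia.
  destruct (H1 e He) as [_ [_ Hne]].
  destruct (Nat.eqb_spec v (e1 e)), (Nat.eqb_spec v (e2 e)), (Nat.eqb_spec (e1 e) v), (Nat.eqb_spec (e2 e) v);
    simpl; try lia; apply Ceq; simpl; ring.
Qed.
Lemma split_tb : forall B e1 e2 n v (G : nat -> Cplx), simple_graph B e1 e2 n ->
  Csum (2 * B) (fun c => if Nat.eqb (tb B e1 e2 c) v then G (ub B c) else C0)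
  = Csum B (fun e => if incidentb e1 e2 v e then G e else C0).
Proof.
  intros B e1 e2 n v G [H1 _]. replace (2 * B)%nat with (B + B)%nat by lia. rewrite Csum_split.
  rewrite <- Csum_add. apply Csum_ext; intros e He. unfold tb, ub, incidentb.
  destruct (Nat.ltb_spec e B); [|lia]. destruct (Nat.ltb_spec (B + e) B); [lia|].
  replace (B + e - B)%nat with e by lia.
  destruct (H1 e He) as [_ [_ Hne]].
  destruct (Nat.eqb_spec (e2 e) v), (Nat.eqb_spec (e1 e) v);
    simpl; try lia; apply Ceq; simpl; ring.
Qed.

Lemma delta_ub_b : forall B e1 e2 n b b', simple_graph B e1 e2 n -> (b < 2 * B)%nat -> (b' < 2 * B)%nat ->
  tb B e1 e2 b = tb B e1 e2 b' -> delta (ub B b') (ub B b) = delta b b'.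
Proof. intros. unfold delta. destruct (Nat.eqb_spec b b'). subst; rewrite Nat.eqb_refl; auto.
  destruct (Nat.eqb_spec (ub B b') (ub B b)); auto.
  destruct (ub_eq B b b') as [?|?]; auto; [lia|]. subst b'. rewrite tb_revb in H2 by auto.
  exfalso; exact (ob_ne_tb B e1 e2 n b H H0 (eq_sym H2)). Qed.
Lemma delta_ub_o : forall B e1 e2 n b b', simple_graph B e1 e2 n -> (b < 2 * B)%nat -> (b' < 2 * B)%nat ->
  ob B e1 e2 b = ob B e1 e2 b' -> delta (ub B b') (ub B b) = delta b b'.
Proof. intros. unfold delta. destruct (Nat.eqb_spec b b'). subst; rewrite Nat.eqb_refl; auto.
  destruct (Nat.eqb_spec (ub B b') (ub B b)); auto.
  destruct (ub_eq B b b') as [?|?]; auto; [lia|]. subst b'. rewrite ob_revb in H2 by auto.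
  exfalso; exact (ob_ne_tb B e1 e2 n b H H0 H2). Qed.

Lemma S_row : forall B e1 e2 n sigma b b', simple_graph B e1 e2 n -> vertex_unitary B e1 e2 n sigma ->
  (b < 2 * B)%nat -> (b' < 2 * B)%nat ->
  Csum (2 * B) (fun c => Cmul (Smat B e1 e2 sigma b c) (Cconj (Smat B e1 e2 sigma b' c))) = delta b b'.
Proof.
  intros B e1 e2 n sigma b b' Hg Hu Hb Hb'.
  destruct (Nat.eq_dec (tb B e1 e2 b) (tb B e1 e2 b')) as [E|E].
  - set (v := tb B e1 e2 b) in *.
    rewrite (Csum_ext _ _ (fun c => if Nat.eqb v (ob B e1 e2 c) then
        Cmul (sigma v (ub B c) (ub B b)) (Cconj (sigma v (ub B c) (ub B b'))) else C0)).
    + rewrite (split_ob B e1 e2 n v (fun e => Cmul (sigma v e (ub B b)) (Cconj (sigma v e (ub B b'))))) by auto.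
      destruct (Hu v (ub B b') (ub B b)) as [H1 _]; try apply ub_lt; auto.
      unfold v; eapply tb_lt; eauto. rewrite E; apply inc_tb; auto. unfold v; apply inc_tb; auto.
      rewrite <- (delta_ub_b B e1 e2 n b b'); auto. unfold delta. rewrite <- H1.
      apply Csum_ext; intros. destruct (incidentb e1 e2 v i); auto. ring.
    + intros c Hc. unfold Smat. rewrite <- E. fold v. destruct (Nat.eqb v (ob B e1 e2 c)); auto.
      rewrite Cconj_C0; ring.
  - rewrite Csum_zero. unfold delta. destruct (Nat.eqb_spec b b'); auto. subst; lia.
    intros c Hc. unfold Smat. destruct (Nat.eqb_spec (tb B e1 e2 b) (ob B e1 e2 c)),
      (Nat.eqb_spec (tb B e1 e2 b') (ob B e1 e2 c)); try lia; rewrite ?Cconj_C0; ring.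
Qed.

Lemma S_col : forall B e1 e2 n sigma c c', simple_graph B e1 e2 n -> vertex_unitary B e1 e2 n sigma ->
  (c < 2 * B)%nat -> (c' < 2 * B)%nat ->
  Csum (2 * B) (fun b => Cmul (Cconj (Smat B e1 e2 sigma b c)) (Smat B e1 e2 sigma b c')) = delta c c'.
Proof.
  intros B e1 e2 n sigma c c' Hg Hu Hc Hc'.
  destruct (Nat.eq_dec (ob B e1 e2 c) (ob B e1 e2 c')) as [E|E].
  - set (v := ob B e1 e2 c) in *.
    rewrite (Csum_ext _ _ (fun b => if Nat.eqb (tb B e1 e2 b) v then
        Cmul (Cconj (sigma v (ub B c) (ub B b))) (sigma v (ub B c') (ub B b)) else C0)).
    + rewrite (split_tb B e1 e2 n v (fun e => Cmul (Cconj (sigma v (ub B c) e)) (sigma v (ub B c') e))) by auto.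
      destruct (Hu v (ub B c') (ub B c)) as [_ H1]; try apply ub_lt; auto.
      unfold v; eapply ob_lt; eauto. rewrite E; apply inc_ob; auto. unfold v; apply inc_ob; auto.
      rewrite <- (delta_ub_o B e1 e2 n c c'); auto. unfold delta. rewrite <- H1.
      apply Csum_ext; intros. destruct (incidentb e1 e2 v i); auto. ring.
    + intros b Hb. unfold Smat. rewrite <- E. fold v.
      destruct (Nat.eqb_spec (tb B e1 e2 b) v); auto. rewrite e; auto.
      rewrite Cconj_C0; ring.
  - rewrite Csum_zero. unfold delta. destruct (Nat.eqb_spec c c'); auto. subst; lia.
    intros b Hb. unfold Smat. destruct (Nat.eqb_spec (tb B e1 e2 b) (ob B e1 e2 c)),
      (Nat.eqb_spec (tb B e1 e2 b) (ob B e1 e2 c')); try lia; rewrite ?Cconj_C0; ring.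
Qed.

Lemma U_row : forall B e1 e2 n L sigma k, simple_graph B e1 e2 n -> vertex_unitary B e1 e2 n sigma ->
  RowU (2 * B) (Umat B e1 e2 L sigma k).
Proof.
  intros; intros b b' Hb Hb'. unfold Umat.
  rewrite (Csum_ext _ _ (fun c => Cmul (Cmul (Cexpi (k * L (ub B b))) (Cconj (Cexpi (k * L (ub B b')))))
     (Cmul (Smat B e1 e2 sigma b c) (Cconj (Smat B e1 e2 sigma b' c))))).
  rewrite <- Csum_mull, (S_row B e1 e2 n) by auto. unfold delta. destruct (Nat.eqb_spec b b').
  subst. rewrite Cmul_expi_conj. ring. ring.
  intros. rewrite Cconj_mul. ring.
Qed.

Lemma U_col : forall B e1 e2 n L sigma k, simple_graph B e1 e2 n -> vertex_unitary B e1 e2 n sigma ->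
  ColU (2 * B) (Umat B e1 e2 L sigma k).
Proof.
  intros; intros c c' Hc Hc'. unfold Umat. rewrite <- (S_col B e1 e2 n sigma c c') by auto.
  apply Csum_ext; intros. rewrite Cconj_mul.
  transitivity (Cmul (Cmul (Cexpi (k * L (ub B i))) (Cconj (Cexpi (k * L (ub B i)))))
     (Cmul (Cconj (Smat B e1 e2 sigma i c)) (Smat B e1 e2 sigma i c'))). ring.
  rewrite Cmul_expi_conj. ring.
Qed.

Lemma U_norm : forall B e1 e2 L sigma k b c,
  Cnorm2 (Umat B e1 e2 L sigma k b c) = Mmat B e1 e2 sigma b c.
Proof. intros. unfold Umat, Mmat. rewrite Cnorm2_mul, Cexpi_norm. ring. Qed.

Definition step B e1 e2 x y : Prop :=
  (y < 2 * B)%nat /\ tb B e1 e2 x = ob B e1 e2 y /\ y <> revb B x.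

Lemma u_step : forall B e1 e2 n L sigma k x y, simple_graph B e1 e2 n -> no_backscattering B e1 e2 n sigma ->
  (x < 2 * B)%nat -> (y < 2 * B)%nat -> Umat B e1 e2 L sigma k x y <> C0 -> step B e1 e2 x y.
Proof.
  intros B e1 e2 n L sigma k x y Hg Hnb Hx Hy H. unfold Umat, Smat in H.
  destruct (Nat.eqb_spec (tb B e1 e2 x) (ob B e1 e2 y)).
  - split; auto. split; auto. intro Hr. apply H. subst y. rewrite ub_revb by auto.
    rewrite Hnb. apply Ceq; simpl; ring. eapply tb_lt; eauto. apply ub_lt; auto. apply inc_tb; auto.
  - exfalso; apply H; apply Ceq; simpl; ring.
Qed.

Inductive FW (B : nat) (e1 e2 : nat -> nat) : list nat -> nat -> nat -> Prop :=
| FW1 : forall a, (a < 2 * B)%nat -> FW B e1 e2 [a] a a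
| FWc : forall a b l c, (a < 2 * B)%nat -> step B e1 e2 a b -> FW B e1 e2 l b c -> FW B e1 e2 (a :: l) a c.

Inductive RW (B : nat) (e1 e2 : nat -> nat) : list nat -> nat -> nat -> Prop :=
| RW0 : forall x, (x < 2 * B)%nat -> RW B e1 e2 [x] x x
| RWS : forall l x z c, RW B e1 e2 l x z -> step B e1 e2 z c -> RW B e1 e2 (c :: l) x c.

Lemma FW_app : forall B e1 e2 l1 a b, FW B e1 e2 l1 a b -> forall l2 a' c, FW B e1 e2 l2 a' c ->
  step B e1 e2 b a' -> FW B e1 e2 (l1 ++ l2) a c.
Proof. induction 1; intros; simpl. econstructor; eauto. econstructor; eauto. Qed.

Lemma FW_head : forall B e1 e2 l a c, FW B e1 e2 l a c -> nth 0 l O = a.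
Proof. destruct 1; auto. Qed.
Lemma FW_lt : forall B e1 e2 l a c, FW B e1 e2 l a c -> forall x, In x l -> (x < 2 * B)%nat.
Proof. induction 1; simpl; intros x [?|?]; subst; auto. contradiction. Qed.
Lemma FW_steps : forall B e1 e2 l a c, FW B e1 e2 l a c ->
  forall i, (S i < length l)%nat -> step B e1 e2 (nth i l O) (nth (S i) l O).
Proof. induction 1; simpl; intros. lia. destruct i. apply FW_head in H1. rewrite H1; auto.
  apply IHFW. lia. Qed.
Lemma FW_last : forall B e1 e2 l a c, FW B e1 e2 l a c -> nth (length l - 1) l O = c.
Proof. induction 1; simpl; auto. destruct l. inversion H1. simpl in *. rewrite Nat.sub_0_r in IHFW. auto. Qed.
Lemma FW_len : forall B e1 e2 l a c, FW B e1 e2 l a c -> (0 < length l)%nat.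
Proof. destruct 1; simpl; lia. Qed.

Lemma cycle_of_FW : forall B e1 e2 l a c, FW B e1 e2 l a c -> step B e1 e2 c a -> is_cycle B e1 e2 l.
Proof.
  intros. pose proof (FW_len _ _ _ _ _ _ H). split; auto. split. eapply FW_lt; eauto.
  intros i Hi. destruct (Nat.eq_dec (S i) (length l)).
  - replace ((i + 1) mod length l)%nat with O.
    rewrite (FW_head _ _ _ _ _ _ H). replace i with (length l - 1)%nat by lia.
    rewrite (FW_last _ _ _ _ _ _ H). destruct H0 as [_ [? ?]]. auto.
    rewrite Nat.add_1_r, e, Nat.mod_same; lia.
  - rewrite Nat.mod_small by lia. rewrite Nat.add_1_r.
    destruct (FW_steps _ _ _ _ _ _ H i) as [_ [? ?]]. lia. auto.
Qed.

Lemma RW_lt_head : forall B e1 e2 l x c, RW B e1 e2 l x c -> (c < 2 * B)%nat.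
Proof. destruct 1; auto. destruct H0; auto. Qed.
Lemma RW_lt_last : forall B e1 e2 l x c, RW B e1 e2 l x c -> (x < 2 * B)%nat.
Proof. induction 1; auto. Qed.
Lemma RW_in : forall B e1 e2 l x c, RW B e1 e2 l x c -> In x l.
Proof. induction 1; simpl; auto. Qed.
Lemma RW_len : forall B e1 e2 l x c, RW B e1 e2 l x c -> (0 < length l)%nat.
Proof. destruct 1; simpl; lia. Qed.

Lemma FW_of_RW : forall B e1 e2 l x c, RW B e1 e2 l x c -> FW B e1 e2 (rev l) x c.
Proof. induction 1; simpl. constructor; auto. eapply FW_app; eauto. constructor. destruct H0; auto. Qed.

Lemma FWr_of_RW : forall B e1 e2 l x c, RW B e1 e2 l x c ->
  FW B e1 e2 (map (revb B) l) (revb B c) (revb B x).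
Proof.
  induction 1; simpl. constructor; apply revb_lt; auto.
  pose proof (RW_lt_head _ _ _ _ _ _ H) as Hz. destruct H0 as [Hc [Ht Hn]].
  econstructor. apply revb_lt; auto. 2: eauto.
  split. apply revb_lt; auto. split. rewrite tb_revb, ob_revb by auto. auto.
  rewrite revb_revb by auto. auto.
Qed.

Lemma fork : forall B e1 e2 l1 x c, RW B e1 e2 l1 x c -> forall l2 y, RW B e1 e2 l2 y c ->
  length l1 = length l2 -> x <> y -> ob B e1 e2 x = ob B e1 e2 y ->
  exists p, is_cycle B e1 e2 p /\ (length p <= 2 * (length l1 - 1))%nat /\ In x p.
Proof.
  induction 1 as [x Hx | l1 x z1 c H1 IH st1]; intros l2 y H2 Hlen Hxy Ho.
  - inversion H2; subst. contradiction. pose proof (RW_len _ _ _ _ _ _ H). simpl in Hlen; lia.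
  - inversion H2 as [y' Hy' | l2' y' z2 c' H2' st2]; subst.
    + pose proof (RW_len _ _ _ _ _ _ H1). simpl in Hlen; lia.
    + simpl in Hlen. destruct (Nat.eq_dec z1 z2) as [E|E].
      * subst z2. destruct (IH l2' y H2') as [p [Hp1 [Hp2 Hp3]]]; auto.
        exists p; split; auto. split; auto. simpl. lia.
      * pose proof (RW_lt_head _ _ _ _ _ _ H1) as Hz1. pose proof (RW_lt_head _ _ _ _ _ _ H2') as Hz2.
        pose proof (RW_lt_last _ _ _ _ _ _ H1) as Hx1. pose proof (RW_lt_last _ _ _ _ _ _ H2') as Hy1.
        exists (rev l1 ++ map (revb B) l2').
        assert (HF : FW B e1 e2 (rev l1 ++ map (revb B) l2') x (revb B y)).
        { eapply FW_app. apply FW_of_RW; eauto. apply FWr_of_RW; eauto.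
          split. apply revb_lt; auto. split. rewrite ob_revb by auto.
          destruct st1 as [_ [? _]]; destruct st2 as [_ [? _]]. congruence.
          intro E'. apply E. apply revb_inj with B; auto. }
        split. eapply cycle_of_FW; eauto.
        split; auto. split. rewrite tb_revb; auto. rewrite revb_revb; auto.
        split. rewrite app_length, rev_length, map_length. simpl. lia.
        apply in_or_app; left. apply -> in_rev. eapply RW_in; eauto.
Qed.

Lemma Csum_nonzero : forall n F, Csum n F <> C0 -> exists i, (i < n)%nat /\ F i <> C0.
Proof.
  intros. destruct (excluded_middle_informative (exists i, (i < n)%nat /\ F i <> C0)); auto.
  exfalso; apply H. apply Csum_zero. intros. destruct (excluded_middle_informative (F i = C0)); auto.
  exfalso; apply n0; eauto.
Qed.
Lemma Cmul_nonzero : forall x y, Cmul x y <> C0 -> x <> C0 /\ y <> C0.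
Proof. intros; split; intro; subst; apply H; apply Ceq; simpl; ring. Qed.

Lemma upow_RW : forall B e1 e2 n L sigma k, simple_graph B e1 e2 n -> no_backscattering B e1 e2 n sigma ->
  forall t x c, (x < 2 * B)%nat -> (c < 2 * B)%nat ->
  Upow (2 * B) (Umat B e1 e2 L sigma k) t x c <> C0 ->
  exists l, RW B e1 e2 l x c /\ length l = S t.
Proof.
  intros B e1 e2 n L sigma k Hg Hnb. induction t; intros x c Hx Hc H.
  - simpl in H. unfold delta in H. destruct (Nat.eqb_spec x c). subst. exists [c]; split; auto. constructor; auto.
    contradiction.
  - rewrite Upow_right in H by auto. apply Csum_nonzero in H. destruct H as [z [Hz H]].
    apply Cmul_nonzero in H. destruct H as [H1 H2].
    destruct (IHt x z Hx Hz H1) as [l [Hl Hll]]. exists (c :: l). split. econstructor; eauto.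
    eapply u_step; eauto. simpl; auto.
Qed.

Lemma one_nonzero : forall n F, (forall x y, (x < n)%nat -> (y < n)%nat -> x <> y -> F x = C0 \/ F y = C0) ->
  Cnorm2 (Csum n F) = Rsum n (fun i => Cnorm2 (F i)).
Proof.
  induction n; intros. simpl. apply Cnorm2_C0.
  simpl. destruct (excluded_middle_informative (F n = C0)) as [E|E].
  - rewrite E. replace (Cadd (Csum n F) C0) with (Csum n F) by (apply Ceq; simpl; ring).
    rewrite IHn, Cnorm2_C0. ring. intros; apply H; lia.
  - rewrite Csum_zero, Rsum_zero. replace (Cadd C0 (F n)) with (F n). ring. apply Ceq; simpl; ring.
    intros. destruct (H i n); try lia; auto. rewrite H1; apply Cnorm2_C0. congruence.
    intros. destruct (H i n); try lia; auto. congruence.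
Qed.

Fixpoint Wn B e1 e2 (s a e : nat) : Prop :=
  match s with O => a = e | S s' => exists x, step B e1 e2 a x /\ Wn B e1 e2 s' x e end.

Definition InC B e1 e2 T e : Prop := on_short_cycle B e1 e2 (2 * T) (ub B e).

Definition Bad B e1 e2 T t a : Prop :=
  exists s, (s < t)%nat /\ exists e, (e < 2 * B)%nat /\ InC B e1 e2 T e /\ Wn B e1 e2 (S s) a e.

Lemma good : forall B e1 e2 n L sigma k T, simple_graph B e1 e2 n -> no_backscattering B e1 e2 n sigma ->
  forall t, (t <= T)%nat -> forall a, (a < 2 * B)%nat -> ~ Bad B e1 e2 T t a ->
  forall c, (c < 2 * B)%nat -> Cnorm2 (Upow (2 * B) (Umat B e1 e2 L sigma k) t a c) = Mpow B e1 e2 sigma t a c.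
Proof.
  intros B e1 e2 n L sigma k T Hg Hnb. induction t; intros Ht a Ha Hbad c Hc.
  - simpl. unfold delta. destruct (Nat.eqb a c). unfold Cnorm2; simpl; ring. apply Cnorm2_C0.
  - simpl. rewrite one_nonzero.
    + apply Rsum_ext; intros x Hx. rewrite Cnorm2_mul, U_norm.
      destruct (excluded_middle_informative (Umat B e1 e2 L sigma k a x = C0)) as [E|E].
      * rewrite <- (U_norm B e1 e2 L sigma k), E, Cnorm2_C0. ring.
      * rewrite IHt; auto. lia. intro Hb. apply Hbad. destruct Hb as [s [Hs [e [He [HC HW]]]]].
        exists (S s). split. lia. exists e. split; auto. split; auto. exists x. split; auto.
        eapply (u_step B e1 e2 n L sigma k); eauto.
    + intros x y Hx Hy Hxy.
      destruct (excluded_middle_informative (Cmul (Umat B e1 e2 L sigma k a x) (Upow (2 * B) (Umat B e1 e2 L sigma k) t x c) = C0)); auto.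
      destruct (excluded_middle_informative (Cmul (Umat B e1 e2 L sigma k a y) (Upow (2 * B) (Umat B e1 e2 L sigma k) t y c) = C0)); auto.
      exfalso. apply Cmul_nonzero in n0. apply Cmul_nonzero in n1.
      destruct n0 as [Ux Px]; destruct n1 as [Uy Py].
      apply (u_step B e1 e2 n L sigma k) in Ux; auto. apply (u_step B e1 e2 n L sigma k) in Uy; auto.
      destruct (upow_RW B e1 e2 n L sigma k Hg Hnb t x c Hx Hc Px) as [l1 [Hl1 Hn1]].
      destruct (upow_RW B e1 e2 n L sigma k Hg Hnb t y c Hy Hc Py) as [l2 [Hl2 Hn2]].
      destruct (fork B e1 e2 l1 x c Hl1 l2 y Hl2) as [p [Hp1 [Hp2 Hp3]]]; auto. congruence.
      destruct Ux as [_ [? _]]; destruct Uy as [_ [? _]]; congruence.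
      apply Hbad. exists O. split. lia. exists x. split; auto. split.
      exists p, x. split; auto. split; auto. rewrite Hn1 in Hp2. lia.
      exists x. split; auto. simpl; auto.
Qed.

Lemma countP_S : forall n P, countP (S n) P = (countP n P + if excluded_middle_informative (P n) then 1 else 0)%nat.
Proof. reflexivity. Qed.

Lemma countP_ext : forall n P Q, (forall i, (i < n)%nat -> (P i <-> Q i)) -> countP n P = countP n Q.
Proof. induction n; intros; auto. rewrite !countP_S. rewrite (IHn P Q) by auto.
  destruct (excluded_middle_informative (P n)), (excluded_middle_informative (Q n)); auto;
  exfalso; [apply n0; apply H | apply n0; apply H]; auto. Qed.
Lemma countP_le : forall n P Q, (forall i, (i < n)%nat -> P i -> Q i) -> (countP n P <= countP n Q)%nat.
Proof. induction n; intros; auto. rewrite !countP_S.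
  assert (IH := IHn P Q (fun i Hi => H i ltac:(lia))).
  destruct (excluded_middle_informative (P n)), (excluded_middle_informative (Q n)); try lia.
  exfalso; eauto. Qed.
Lemma countP_or : forall n P Q, (countP n (fun i => P i \/ Q i) <= countP n P + countP n Q)%nat.
Proof. induction n; intros; auto. rewrite !countP_S. specialize (IHn P Q).
  destruct (excluded_middle_informative (P n \/ Q n)), (excluded_middle_informative (P n)),
    (excluded_middle_informative (Q n)); try lia. tauto. Qed.
Lemma countP_disj : forall n P Q, (forall i, (i < n)%nat -> ~ (P i /\ Q i)) ->
  countP n (fun i => P i \/ Q i) = (countP n P + countP n Q)%nat.
Proof. induction n; intros; auto. rewrite !countP_S. rewrite IHn by (intros; apply H; lia).
  destruct (excluded_middle_informative (P n \/ Q n)), (excluded_middle_informative (P n)),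
    (excluded_middle_informative (Q n)); try lia; try tauto. exfalso; apply (H n); auto. Qed.
Lemma countP_split : forall m k P, countP (m + k) P = (countP m P + countP k (fun i => P (m + i)%nat))%nat.
Proof. induction k; intros. rewrite Nat.add_0_r; simpl; lia. rewrite Nat.add_succ_r, !countP_S, IHk. cbv beta. lia. Qed.
Lemma countP_filter : forall n (p : nat -> bool), length (filter p (seq 0 n)) = countP n (fun i => p i = true).
Proof. induction n; intros; auto. rewrite seq_S, filter_app, length_app, IHn, countP_S. simpl.
  destruct (p n) eqn:E; destruct (excluded_middle_informative (true = true)), (excluded_middle_informative (false = true));
  simpl; try lia; congruence. Qed.
Lemma countP_remove : forall n P z, (z < n)%nat -> P z ->
  (countP n (fun i => P i /\ i <> z) + 1)%nat = countP n P.
Proof. induction n; intros; [lia|]. rewrite !countP_S.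
  destruct (Nat.eq_dec z n).
  - subst. rewrite (countP_ext n _ P). destruct (excluded_middle_informative (P n /\ n <> n)); [tauto|].
    destruct (excluded_middle_informative (P n)); [lia|tauto]. intros; split; intros; [tauto|split; auto; lia].
  - assert (n <> z) by lia. rewrite <- (IHn P z) by (auto; lia).
    destruct (excluded_middle_informative (P n /\ n <> z)), (excluded_middle_informative (P n)); try lia; tauto.
Qed.
Lemma countP_false : forall n P, (forall i, (i < n)%nat -> ~ P i) -> countP n P = O.
Proof. induction n; intros; auto. rewrite countP_S, IHn by (intros; apply H; lia).
  destruct (excluded_middle_informative (P n)); auto. exfalso; apply (H n); auto. Qed.
Lemma countP_one : forall n e, (countP n (fun a => a = e) <= 1)%nat.
Proof. induction n; intros; simpl; auto. destruct (excluded_middle_informative (n = e)).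
  rewrite countP_false. lia. intros; lia. specialize (IHn e); lia. Qed.

Lemma union_bound : forall n m (Q : nat -> Prop) (Rr : nat -> nat -> Prop) K,
  (forall x, (x < m)%nat -> Q x -> (countP n (fun a => Rr a x) <= K)%nat) ->
  (countP n (fun a => exists x, (x < m)%nat /\ Q x /\ Rr a x) <= countP m Q * K)%nat.
Proof.
  induction m; intros.
  - simpl. rewrite (countP_ext n _ (fun _ => False)). clear. induction n; simpl; auto.
    destruct (excluded_middle_informative False); [tauto|lia]. intros; split; intros; [destruct H1; lia|tauto].
  - rewrite (countP_ext n _ (fun a => (exists x, (x < m)%nat /\ Q x /\ Rr a x) \/ (Q m /\ Rr a m))).
    eapply Nat.le_trans. apply countP_or. rewrite countP_S.
    assert (IH := IHm Q Rr K (fun x Hx Hq => H x ltac:(lia) Hq)).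
    destruct (excluded_middle_informative (Q m)).
    + specialize (H m). assert (countP n (fun a => Q m /\ Rr a m) <= countP n (fun a => Rr a m))%nat
        by (apply countP_le; tauto). specialize (H ltac:(lia) q). nia.
    + rewrite (countP_ext n (fun a => Q m /\ Rr a m) (fun _ => False)).
      replace (countP n (fun _ => False)) with O. lia.
      clear. induction n; simpl; auto. destruct (excluded_middle_informative False); [tauto|lia].
      intros; tauto.
    + intros; split. intros [x [Hx [Hq Hr]]]. destruct (Nat.eq_dec x m). subst; right; auto.
      left; exists x; split; auto; lia. intros [[x [Hx ?]]|[? ?]]. exists x; split; auto. exists m; auto.
Qed.

Lemma union_s : forall n m (Rr : nat -> nat -> Prop),
  INR (countP n (fun a => exists s, (s < m)%nat /\ Rr a s)) <= Rsum m (fun s => INR (countP n (fun a => Rr a s))).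
Proof.
  induction m; intros.
  - simpl. rewrite (countP_ext n _ (fun _ => False)). replace (countP n (fun _ => False)) with O. simpl; lra.
    clear. induction n; simpl; auto. destruct (excluded_middle_informative False); [tauto|lia].
    intros; split; intros; [destruct H0; lia|tauto].
  - rewrite (countP_ext n _ (fun a => (exists s, (s < m)%nat /\ Rr a s) \/ Rr a m)). simpl.
    eapply Rle_trans. apply le_INR. apply countP_or. rewrite plus_INR. specialize (IHm Rr). lra.
    intros; split. intros [s [Hs ?]]. destruct (Nat.eq_dec s m). subst; right; auto.
    left; exists s; split; auto; lia. intros [[s [Hs ?]]|?]. exists s; split; auto. exists m; auto.
Qed.

Lemma deg_count : forall B e1 e2 n v, simple_graph B e1 e2 n ->
  countP (2 * B) (fun a => tb B e1 e2 a = v) = degree B e1 e2 v.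
Proof.
  intros B e1 e2 n v [H1 _]. unfold degree. rewrite countP_filter.
  replace (2 * B)%nat with (B + B)%nat by lia. rewrite countP_split.
  rewrite (countP_ext B (fun e => incidentb e1 e2 v e = true) (fun e => e2 e = v \/ e1 e = v)).
  rewrite countP_disj. f_equal; apply countP_ext; intros; unfold tb.
  destruct (Nat.ltb_spec i B); [tauto|lia].
  destruct (Nat.ltb_spec (B + i) B); [lia|]. replace (B + i - B)%nat with i by lia. tauto.
  intros i Hi [? ?]. destruct (H1 i Hi) as [_ [_ ?]]. congruence.
  intros i Hi. unfold incidentb. rewrite Bool.orb_true_iff, !Nat.eqb_eq. tauto.
Qed.

Lemma pred_count : forall B e1 e2 n d x, simple_graph B e1 e2 n -> regular B e1 e2 n d -> (x < 2 * B)%nat ->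
  (countP (2 * B) (fun a => step B e1 e2 a x) <= d - 1)%nat.
Proof.
  intros B e1 e2 n d x Hg Hr Hx.
  eapply Nat.le_trans. apply (countP_le _ _ (fun a => tb B e1 e2 a = ob B e1 e2 x /\ a <> revb B x)).
  - intros a Ha [_ [Ht Hn]]. split; auto. intro E. apply Hn. subst a. rewrite revb_revb; auto.
  - pose proof (countP_remove (2 * B) (fun a => tb B e1 e2 a = ob B e1 e2 x) (revb B x)
      (revb_lt B x Hx) (tb_revb B e1 e2 x Hx)).
    rewrite deg_count with (n := n) in H by auto. rewrite Hr in H. lia. eapply ob_lt; eauto.
Qed.

Lemma Wn_count : forall B e1 e2 n d, simple_graph B e1 e2 n -> regular B e1 e2 n d ->
  forall s e, (e < 2 * B)%nat -> (countP (2 * B) (fun a => Wn B e1 e2 s a e) <= Nat.pow (d - 1) s)%nat.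
Proof.
  intros B e1 e2 n d Hg Hr. induction s; intros e He.
  - simpl. apply countP_one.
  - rewrite (countP_ext _ _ (fun a => exists x, (x < 2 * B)%nat /\ Wn B e1 e2 s x e /\ step B e1 e2 a x)).
    eapply Nat.le_trans. apply union_bound. intros. eapply pred_count; eauto.
    specialize (IHs e He). rewrite Nat.pow_succ_r', (Nat.mul_comm (d-1)). apply Nat.mul_le_mono_r; auto.
    intros; simpl; split. intros [x [Hs Hw]]. exists x. split; auto. destruct Hs; auto.
    intros [x [_ [? ?]]]; eauto.
Qed.

Lemma InC_count : forall B e1 e2 T,
  countP (2 * B) (InC B e1 e2 T) = (2 * card_CBt B e1 e2 (2 * T))%nat.
Proof.
  intros. unfold card_CBt, InC. replace (2 * B)%nat with (B + B)%nat by lia. rewrite countP_split.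
  assert (E1 : countP B (fun e => on_short_cycle B e1 e2 (2 * T) (ub B e)) = countP B (on_short_cycle B e1 e2 (2 * T))).
  { apply countP_ext; intros. unfold ub. destruct (Nat.ltb_spec i B); [tauto|lia]. }
  assert (E2 : countP B (fun i => on_short_cycle B e1 e2 (2 * T) (ub B (B + i))) = countP B (on_short_cycle B e1 e2 (2 * T))).
  { apply countP_ext; intros. unfold ub. destruct (Nat.ltb_spec (B + i) B); [lia|].
    replace (B + i - B)%nat with i by lia. tauto. }
  rewrite E1, E2. lia.
Qed.

Lemma geom : forall r t, 2 <= r -> Rsum t (fun s => r ^ (S s)) <= 2 * r ^ t.
Proof. induction t; intros; simpl. lra. specialize (IHt H).
  assert (0 <= r ^ t) by (apply pow_le; lra). simpl in IHt. nra. Qed.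

Lemma Bad_count : forall B e1 e2 n d T t, simple_graph B e1 e2 n -> regular B e1 e2 n d -> (3 <= d)%nat ->
  INR (countP (2 * B) (Bad B e1 e2 T t)) <= 4 * INR (card_CBt B e1 e2 (2 * T)) * (INR d - 1) ^ t.
Proof.
  intros B e1 e2 n d T t Hg Hr Hd. unfold Bad.
  eapply Rle_trans. apply union_s.
  assert (Hd1 : INR (d - 1) = INR d - 1) by (rewrite minus_INR by lia; simpl; ring).
  eapply Rle_trans. apply Rsum_le with (G := fun s => INR (2 * card_CBt B e1 e2 (2 * T)) * (INR d - 1) ^ (S s)).
  - intros s Hs. rewrite <- Hd1, <- pow_INR, <- mult_INR. apply le_INR.
    rewrite <- InC_count. apply union_bound. intros. eapply Wn_count; eauto.
  - rewrite <- Rsum_mull. rewrite mult_INR. simpl (INR 2).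
    assert (2 <= INR d - 1). { apply le_INR in Hd. simpl in Hd. lra. }
    pose proof (geom (INR d - 1) t H). pose proof (pos_INR (card_CBt B e1 e2 (2 * T))). nra.
Qed.

Lemma Mpow_nonneg : forall B e1 e2 sigma t a c, 0 <= Mpow B e1 e2 sigma t a c.
Proof. induction t; intros; simpl. destruct (Nat.eqb a c); lra.
  apply Rsum_nonneg; intros. apply Rmult_le_pos; auto. unfold Mmat; apply Cnorm2_nonneg. Qed.

Lemma Mpow_rowsum : forall B e1 e2 n sigma, simple_graph B e1 e2 n -> vertex_unitary B e1 e2 n sigma ->
  forall t a, (a < 2 * B)%nat -> Rsum (2 * B) (fun c => Mpow B e1 e2 sigma t a c) = 1.
Proof.
  intros B e1 e2 n sigma Hg Hu. set (L := fun _ : nat => 0). set (k := 0). induction t; intros a Ha.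
  - simpl. rewrite (Rsum_single _ _ a); auto. rewrite Nat.eqb_refl; auto.
    intros. destruct (Nat.eqb_spec a i); [lia|auto].
  - simpl. rewrite Rsum_swap. rewrite (Rsum_ext _ _ (fun x => Mmat B e1 e2 sigma a x)).
    + pose proof (U_row B e1 e2 n L sigma k Hg Hu a a Ha Ha). unfold delta in H; rewrite Nat.eqb_refl in H.
      rewrite (Csum_ext _ _ (fun c => CR (Mmat B e1 e2 sigma a c))) in H.
      rewrite <- CR_sum in H. apply (f_equal re) in H. simpl in H. auto.
      intros. rewrite Cmul_conj, U_norm. auto.
    + intros x Hx. rewrite <- Rsum_mull, IHt by auto. ring.
Qed.

Lemma re_conj_bound : forall x y K, 0 <= K -> Cabs x <= K -> Cabs y <= K ->
  Rabs (re (Cmul (Cconj x) y)) <= K * K.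
Proof.
  intros [a b] [c e] K HK Hx Hy. unfold Cabs, Cnorm2 in *; simpl in *.
  assert (H1 : a * a + b * b <= K * K).
  { pose proof (sqrt_pos (a * a + b * b)). rewrite <- (sqrt_sqrt (a * a + b * b)) by nra. nra. }
  assert (H2 : c * c + e * e <= K * K).
  { pose proof (sqrt_pos (c * c + e * e)). rewrite <- (sqrt_sqrt (c * c + e * e)) by nra. nra. }
  assert (H3 : (a * c - - b * e) * (a * c - - b * e) <= (K * K) * (K * K)).
  { assert (H4 : (a * c - - b * e) * (a * c - - b * e) <= (a * a + b * b) * (c * c + e * e)).
    { assert (0 <= (a * e - b * c) * (a * e - b * c)) by (pose proof (Rle_0_sqr (a * e - b * c)); unfold Rsqr in *; lra).
      replace ((a * a + b * b) * (c * c + e * e)) with ((a * c - - b * e) * (a * c - - b * e) + (a * e - b * c) * (a * e - b * c)) by ring. lra. }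
    eapply Rle_trans. apply H4. apply Rmult_le_compat; nra. }
  assert (0 <= K * K) by nra. rewrite <- (Rabs_pos_eq (K * K)) by auto. apply Rsqr_le_abs_0. unfold Rsqr. auto.
Qed.

Lemma Rsum_countP : forall n F (P : nat -> Prop) K, 0 <= K ->
  (forall a, (a < n)%nat -> ~ P a -> F a <= 0) -> (forall a, (a < n)%nat -> P a -> F a <= K) ->
  Rsum n F <= K * INR (countP n P).
Proof.
  induction n; intros; simpl. lra. rewrite plus_INR.
  assert (IH := IHn F P K H (fun a Ha => H0 a ltac:(lia)) (fun a Ha => H1 a ltac:(lia))).
  destruct (excluded_middle_informative (P n)).
  - specialize (H1 n ltac:(lia) p). simpl. lra.
  - specialize (H0 n ltac:(lia) n0). simpl. lra.
Qed.

Lemma re_fMf : forall B e1 e2 sigma t f,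
  re (f_Mt_f B e1 e2 sigma t f) = Rsum (2 * B) (fun a => Rsum (2 * B) (fun a' =>
     Mpow B e1 e2 sigma t a a' * re (Cmul (Cconj (f a)) (f a')))).
Proof.
  intros. unfold f_Mt_f, cinner. rewrite re_sum. apply Rsum_ext; intros.
  rewrite Csum_mull, re_sum. apply Rsum_ext; intros. destruct (f i), (f i0); simpl. ring.
Qed.

Lemma cross_bound : forall d B e1 e2 n L sigma k T t f kappa, (3 <= d)%nat ->
  simple_graph B e1 e2 n -> regular B e1 e2 n d -> vertex_unitary B e1 e2 n sigma ->
  no_backscattering B e1 e2 n sigma -> (t <= T)%nat -> 0 < kappa ->
  (forall b, (b < 2 * B)%nat -> Cabs (f b) <= kappa) ->
  hh (2 * B) (Umat B e1 e2 L sigma k) f t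
  <= re (f_Mt_f B e1 e2 sigma t f) + 8 * kappa ^ 2 * (INR d - 1) ^ t * INR (card_CBt B e1 e2 (2 * T)).
Proof.
  intros d B e1 e2 n L sigma k T t f kappa Hd Hg Hr Hu Hnb Ht Hk Hf.
  rewrite re_fMf. unfold hh.
  assert (E : forall a, (a < 2 * B)%nat -> Rsum (2 * B) (fun a' =>
      Cnorm2 (Upow (2 * B) (Umat B e1 e2 L sigma k) t a a') * re (Cmul (Cconj (f a)) (f a')))
     = Rsum (2 * B) (fun a' => Mpow B e1 e2 sigma t a a' * re (Cmul (Cconj (f a)) (f a')))
       + Rsum (2 * B) (fun a' => (Cnorm2 (Upow (2 * B) (Umat B e1 e2 L sigma k) t a a') - Mpow B e1 e2 sigma t a a')
                                  * re (Cmul (Cconj (f a)) (f a')))).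
  { intros. rewrite <- Rsum_add. apply Rsum_ext; intros. ring. }
  rewrite (Rsum_ext _ _ _ E), Rsum_add.
  apply Rplus_le_compat_l.
  eapply Rle_trans. apply Rsum_countP with (P := Bad B e1 e2 T t) (K := 2 * (kappa * kappa)).
  - nra.
  - intros a Ha Hb. right. apply Rsum_zero; intros. rewrite (good B e1 e2 n L sigma k T Hg Hnb t Ht a Ha Hb) by auto. ring.
  - intros a Ha _.
    eapply Rle_trans. apply Rsum_le with (G := fun a' => (Cnorm2 (Upow (2 * B) (Umat B e1 e2 L sigma k) t a a')
                                               + Mpow B e1 e2 sigma t a a') * (kappa * kappa)).
    + intros a' Ha'. pose proof (re_conj_bound (f a) (f a') kappa ltac:(lra) (Hf a Ha) (Hf a' Ha')).
      pose proof (Cnorm2_nonneg (Upow (2 * B) (Umat B e1 e2 L sigma k) t a a')).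
      pose proof (Mpow_nonneg B e1 e2 sigma t a a').
      pose proof (Rle_abs (re (Cmul (Cconj (f a)) (f a')))). pose proof (Rle_abs (- re (Cmul (Cconj (f a)) (f a')))). rewrite Rabs_Ropp in H3.
      destruct (Rle_dec 0 (Cnorm2 (Upow (2 * B) (Umat B e1 e2 L sigma k) t a a') - Mpow B e1 e2 sigma t a a')); nra.
    + right. rewrite (Rsum_ext _ _ (fun a' => kappa * kappa * Cnorm2 (Upow (2 * B) (Umat B e1 e2 L sigma k) t a a')
                                   + kappa * kappa * Mpow B e1 e2 sigma t a a')) by (intros; ring).
      rewrite Rsum_add, <- !Rsum_mull. rewrite Upow_rownorm by (auto; eapply U_row; eauto).
      rewrite (Mpow_rowsum B e1 e2 n sigma) by auto. ring.
  - pose proof (Bad_count B e1 e2 n d T t Hg Hr Hd).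
    assert (0 <= kappa * kappa) by nra.
    replace (kappa ^ 2) with (kappa * kappa) by ring.
    assert (0 <= INR (card_CBt B e1 e2 (2 * T)) * (INR d - 1) ^ t).
    { apply Rmult_le_pos. apply pos_INR. apply pow_le. apply le_INR in Hd. simpl in Hd. lra. }
    nra.
Qed.

Lemma avg_bound : forall g l M, time_avg_limit g l -> (forall k, g k <= M) -> l <= M.
Proof.
  intros g l M [Hint Hlim] Hg.
  apply Rnot_lt_le; intro Hlt.
  destruct (Hlim ((l - M) / 2) ltac:(lra)) as [K0 HK].
  set (K := Rmax K0 0 + 1).
  assert (HK0 : K0 < K) by (unfold K; pose proof (Rmax_l K0 0); lra).
  assert (HKp : 0 < K) by (unfold K; pose proof (Rmax_r K0 0); lra).
  destruct (Hint K HKp) as [pr].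
  specialize (HK K pr HK0 HKp).
  assert (Hle : RiemannInt pr <= M * K).
  { pose proof (@RiemannInt_P19 g (fct_cte M) 0 K pr (RiemannInt_P14 0 K M) ltac:(lra)
      (fun x _ => Hg x)). rewrite RiemannInt_P15 in H. lra. }
  assert (RiemannInt pr / K <= M).
  { unfold Rdiv. apply Rmult_le_reg_r with K; auto. rewrite Rmult_assoc, Rinv_l by lra. lra. }
  apply Rabs_def2 in HK. lra.
Qed.

Theorem proposition4 :
  forall d : nat, (3 <= d)%nat ->
  exists c : R,
  forall (n B : nat) (e1 e2 : nat -> nat) (L : nat -> R)
         (sigma : nat -> nat -> nat -> Cplx) (T : nat) (kappa : R) (f : nat -> Cplx)
         (phi : R -> nat -> nat -> Cplx) (lim : R),
    (0 < B)%nat ->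
    simple_graph B e1 e2 n ->
    regular B e1 e2 n d ->
    (forall e, (e < B)%nat -> 0 < L e) ->
    vertex_unitary B e1 e2 n sigma ->
    no_backscattering B e1 e2 n sigma ->
    (0 < T)%nat ->
    0 < kappa ->
    (forall b, (b < 2 * B)%nat -> Cabs (f b) <= kappa) ->
    TrOp B f = C0 ->
    (forall k, is_onb_eigenbasis B (Umat B e1 e2 L sigma k) (phi k)) ->
    (* V(f,B) = lim / (2B) *)
    time_avg_limit (V_integrand B f phi) lim ->
    lim / (2 * INR B)
      <= 1 / (2 * INR B * INR T) * Rsum (2 * B) (fun b => Cnorm2 (f b))
         + 1 / INR B *
           Rsum T (fun i =>
             w_hat T (INR (S i)) *
             (re (f_Mt_f B e1 e2 sigma (S i) f)
              + c * kappa ^ 2 * (INR d - 1) ^ (S i)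
                  * INR (card_CBt B e1 e2 (2 * T)))).
Proof.
  intros d Hd. exists 8.
  intros n B e1 e2 L sigma T kappa f phi lim HB Hg Hr HL Hu Hnb HT Hk Hf Htr Heig Hlim.
  assert (HBr : 0 < INR B) by (apply lt_0_INR; lia).
  assert (HTr : 0 < INR T) by (apply lt_0_INR; lia).
  set (Bound := 1 / INR T * Rsum (2 * B) (fun a => Cnorm2 (f a))
     + 2 * Rsum T (fun i => w_hat T (INR (S i)) *
             (re (f_Mt_f B e1 e2 sigma (S i) f)
              + 8 * kappa ^ 2 * (INR d - 1) ^ (S i) * INR (card_CBt B e1 e2 (2 * T))))).
  assert (Hpt : forall k, V_integrand B f phi k <= Bound).
  { intros k. destruct (Heig k) as [Hon Hev]. unfold V_integrand.
    eapply Rle_trans. apply (fixed_k_bound (2 * B) (Umat B e1 e2 L sigma k) f T (phi k)).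
    eapply U_row; eauto. eapply U_col; eauto. auto. apply Htr.
    intros j j' Hj Hj'. exact (Hon j j' Hj Hj'). exact Hev.
    unfold Bound. apply Rplus_le_compat_l.
    rewrite Rsum_mull, Rsum_mull. apply Rsum_le; intros i Hi.
    unfold w_hat. rewrite Rabs_pos_eq by apply pos_INR.
    destruct (Rlt_dec (INR (S i)) (INR T)).
    - assert (0 <= INR T - INR (S i)) by lra.
      pose proof (cross_bound d B e1 e2 n L sigma k T (S i) f kappa Hd Hg Hr Hu Hnb ltac:(lia) Hk Hf).
      set (X := re (f_Mt_f B e1 e2 sigma (S i) f) + 8 * kappa ^ 2 * (INR d - 1) ^ S i * INR (card_CBt B e1 e2 (2 * T))) in *.
      replace (2 * (1 / INR T * (1 - INR (S i) / INR T) * X))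
        with (2 * (1 / INR T * (1 / INR T)) * ((INR T - INR (S i)) * X)) by (field; lra).
      apply Rmult_le_compat_l.
      assert (0 < 1 / INR T * (1 / INR T)). { apply Rmult_lt_0_compat; apply Rdiv_lt_0_compat; lra. } lra.
      apply Rmult_le_compat_l; auto.
    - assert (INR T <= INR (S i)) by lra. assert (INR (S i) <= INR T) by (apply le_INR; lia).
      replace (INR T - INR (S i)) with 0 by lra. right; ring. }
  pose proof (avg_bound _ _ _ Hlim Hpt) as Hl.
  unfold Bound in Hl.
  apply Rmult_le_reg_l with (2 * INR B). lra.
  replace (2 * INR B * (lim / (2 * INR B))) with lim by (field; lra).
  eapply Rle_trans. apply Hl. right. field. split; lra.
Qed.
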